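(* A Sturmian sequence in $\{H,V\}$ is symmetric if and only if it is the cutting sequence of a uniformly distributed geodesic on the square torus passing through a Weierstrass point of the torus. Furthermore: (i) even symmetric Sturmian sequences correspond to geodesics passing through the center point $D$; (ii) almost symmetric Sturmian sequences correspond to geodesics passing through the corner point $A$; (iii) odd symmetric Sturmian sequences correspond to geodesics passing through $B$ or $C$.
   Context: The square torus $\mathbb{T}^2=\mathbb{C}/\mathbb{Z}[i]$ is represented as the unit square with top and bottom edges labeled $V$ and left and right edges labeled $H$. Geodesics have positive slope and are traversed North-East; the cutting sequence of a biinfinite geodesic is the biinfinite sequence of labels of edges crossed, where passing through the corner records two symbols $HV$ or $VH$. A geodesic is uniformly distributed when its slope is irrational. A Sturmian sequence is a biinfinite sequence over two letters that is not eventually periodic and has exactly $n+1$ distinct subwords of each length $n$. The Weierstrass points (fixed points of the $180^\circ$ rotation $\iota$ of the square about its center) are: $A$ the corner, $B$ the midpoint of the horizontal edge $V$, $C$ the midpoint of the vertical edge $H$, and $D$ the center of the square. A sequence $\epsilon$ is odd symmetric if there is $N$ with $\epsilon_{N+k}=\epsilon_{N-k}$ for all $k\ge0$; even symmetric if there is $N$ with $\epsilon_{N+k}=\epsilon_{N-k-1}$ for all $k\ge0$; almost symmetric if there is $N$ with $\epsilon_{N+k}=\epsilon_{N-k-1}$ for all $k\ge1$ and $\epsilon_N\ne\epsilon_{N-1}$; symmetric if it is odd, even, or almost symmetric. *)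

(* Defs.v *)
From Stdlib Require Import Reals ZArith List.
Open Scope R_scope.

(** The two edge labels of the unit square: [H] labels the vertical edges
    (left/right, lines x in Z), [V] the horizontal edges (top/bottom,
    lines y in Z). *)
Inductive letter : Type := H | V.

Definition bseq := Z -> letter.

Definition factor (eps : bseq) (k : Z) (n : nat) : list letter :=
  map (fun i => eps (k + Z.of_nat i)%Z) (seq 0 n).

Definition eventually_periodic (eps : bseq) : Prop :=
  exists (p N : Z), (0 < p)%Z /\ forall n : Z, (N <= n)%Z -> eps (n + p)%Z = eps n.

Definition complexity_n_plus_1 (eps : bseq) : Prop :=
  forall n : nat, exists s : list (list letter),
    NoDup s /\ length s = S n /\
    forall w, In w s <-> exists k : Z, w = factor eps k n.

Definition sturmian (eps : bseq) : Prop :=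
  ~ eventually_periodic eps /\ complexity_n_plus_1 eps.

Definition odd_symmetric (eps : bseq) : Prop :=
  exists N : Z, forall k : Z, (0 <= k)%Z -> eps (N + k)%Z = eps (N - k)%Z.

Definition even_symmetric (eps : bseq) : Prop :=
  exists N : Z, forall k : Z, (0 <= k)%Z -> eps (N + k)%Z = eps (N - k - 1)%Z.

Definition almost_symmetric (eps : bseq) : Prop :=
  exists N : Z, (forall k : Z, (1 <= k)%Z -> eps (N + k)%Z = eps (N - k - 1)%Z)
                /\ eps N <> eps (N - 1)%Z.

Definition symmetric (eps : bseq) : Prop :=
  odd_symmetric eps \/ even_symmetric eps \/ almost_symmetric eps.

(** Geometry of the square torus C / Z[i] = R^2 / Z^2.
    A geodesic of positive slope a, traversed North-East, is the image of the
    line t |-> (x0 + t, y0 + a t), t in R. *)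
Definition is_int (r : R) : Prop := exists k : Z, r = IZR k.

Definition irrational (a : R) : Prop :=
  forall p q : Z, q <> 0%Z -> a <> IZR p / IZR q.

Definition uniformly_distributed (a : R) : Prop := 0 < a /\ irrational a.

Definition crosses (x0 y0 a : R) (l : letter) (t : R) : Prop :=
  match l with
  | H => is_int (x0 + t)
  | V => is_int (y0 + a * t)
  end.

(** When two crossings happen at the same time (passing through the corner),
    their relative order (HV or VH) is not constrained. *)
Definition cutting_sequence (x0 y0 a : R) (eps : bseq) : Prop :=
  exists tau : Z -> R,
    (forall n : Z, tau n <= tau (n + 1)%Z) /\
    (forall n : Z, crosses x0 y0 a (eps n) (tau n)) /\
    (forall (l : letter) (t : R), crosses x0 y0 a l t ->
        exists! n : Z, tau n = t /\ eps n = l).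

Definition passes_through (x0 y0 a px py : R) : Prop :=
  exists t : R, is_int (x0 + t - px) /\ is_int (y0 + a * t - py).

(** Weierstrass points: A corner, B midpoint of horizontal edge V,
    C midpoint of vertical edge H, D center. *)
Definition ptA : R * R := (0, 0).
Definition ptB : R * R := (1/2, 0).
Definition ptC : R * R := (0, 1/2).
Definition ptD : R * R := (1/2, 1/2).

Definition through (x0 y0 a : R) (P : R * R) : Prop :=
  passes_through x0 y0 a (fst P) (snd P).

Definition cut_seq_through (Q : (R * R) -> Prop) (eps : bseq) : Prop :=
  exists x0 y0 a : R, uniformly_distributed a /\
    (exists P, Q P /\ through x0 y0 a P) /\ cutting_sequence x0 y0 a eps.

Definition weierstrass (P : R * R) : Prop :=
  P = ptA \/ P = ptB \/ P = ptC \/ P = ptD.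

(* Main.v *)
Require Import Defs.
From Stdlib Require Import Reals ZArith List Lia Lra Classical ClassicalDescription ClassicalEpsilon.
Import ListNotations.

Definition vl (l : letter) : Z := match l with H => 0%Z | V => 1%Z end.

Lemma vl_inj : forall a b, vl a = vl b -> a = b.
Proof. intros [] []; simpl; intros; congruence. Qed.

Lemma vl_range : forall a, (0 <= vl a <= 1)%Z.
Proof. intros []; simpl; lia. Qed.

Definition flip (l : letter) := match l with H => V | V => H end.

Lemma letter_two : forall a b c : letter, a <> b -> c = a \/ c = b.
Proof. intros [] [] []; auto; congruence. Qed.

Lemma factor_len eps k n : length (factor eps k n) = n.
Proof. unfold factor. rewrite length_map, length_seq. reflexivity. Qed.

Lemma factor_nth eps k n t : (t < n)%nat -> nth t (factor eps k n) H = eps (k + Z.of_nat t)%Z.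
Proof.
  intros Ht. unfold factor.
  rewrite nth_indep with (d' := (fun i => eps (k + Z.of_nat i)%Z) 0%nat)
    by (rewrite length_map, length_seq; auto).
  rewrite (map_nth (fun i => eps (k + Z.of_nat i)%Z) (seq 0 n) 0%nat t).
  rewrite seq_nth by auto. reflexivity.
Qed.

Lemma factor_eq_pw eps k k' n :
  factor eps k n = factor eps k' n <-> forall t, (t < n)%nat -> eps (k + Z.of_nat t)%Z = eps (k' + Z.of_nat t)%Z.
Proof.
  split.
  - intros E t Ht. rewrite <- (factor_nth eps k n t Ht), <- (factor_nth eps k' n t Ht). rewrite E. reflexivity.
  - intros E. unfold factor. apply map_ext_in. intros a Ha.
    apply in_seq in Ha. apply E. lia.
Qed.

Lemma factor_snoc eps k n : factor eps k (S n) = factor eps k n ++ [eps (k + Z.of_nat n)%Z].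
Proof. unfold factor. rewrite seq_S, map_app. reflexivity. Qed.

Lemma factor_cons eps k n : factor eps k (S n) = eps k :: factor eps (k+1) n.
Proof.
  unfold factor. simpl. f_equal. { f_equal; lia. }
  rewrite <- seq_shift, map_map. apply map_ext. intros a. f_equal. lia.
Qed.

Lemma win_shift eps k x y :
  factor eps x k = factor eps y k -> eps (x + Z.of_nat k)%Z = eps (y + Z.of_nat k)%Z ->
  factor eps (x+1) k = factor eps (y+1) k.
Proof.
  intros E1 E2. apply factor_eq_pw. intros t Ht.
  destruct (Nat.eq_dec (S t) k) as [e|ne].
  - subst k. replace (x + 1 + Z.of_nat t)%Z with (x + Z.of_nat (S t))%Z by lia.
    replace (y + 1 + Z.of_nat t)%Z with (y + Z.of_nat (S t))%Z by lia. auto.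
  - rewrite factor_eq_pw in E1.
    replace (x + 1 + Z.of_nat t)%Z with (x + Z.of_nat (S t))%Z by lia.
    replace (y + 1 + Z.of_nat t)%Z with (y + Z.of_nat (S t))%Z by lia. apply E1. lia.
Qed.

Lemma PH {A : Type} (g : nat -> A) (s : list A) (m : nat) :
  length s = m -> (forall i, (i <= m)%nat -> In (g i) s) ->
  exists i j, (i < j <= m)%nat /\ g i = g j.
Proof.
  intros Hl Hin. apply NNPP. intros Hno.
  assert (ND : NoDup (map g (seq 0 (S m)))).
  { apply NoDup_map_NoDup_ForallPairs; [|apply seq_NoDup].
    intros a b Ha Hb Eab. apply in_seq in Ha. apply in_seq in Hb.
    destruct (Nat.lt_total a b) as [lt|[eq|gt]]; auto.
    - exfalso. apply Hno. exists a, b. split; [lia|auto].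
    - exfalso. apply Hno. exists b, a. split; [lia|auto]. }
  assert (Inc : incl (map g (seq 0 (S m))) s).
  { intros x Hx. apply in_map_iff in Hx. destruct Hx as [i [<- Hi]].
    apply in_seq in Hi. apply Hin. lia. }
  pose proof (NoDup_incl_length ND Inc) as HL. rewrite length_map, length_seq in HL. lia.
Qed.

Lemma nat_min (P : nat -> Prop) : (exists n, P n) -> exists n, P n /\ forall m, (m < n)%nat -> ~ P m.
Proof.
  intros [n Hn]. induction n as [n IH] using (well_founded_induction lt_wf).
  destruct (classic (exists m, (m < n)%nat /\ P m)) as [[m [Hm Pm]]|No].
  - exact (IH m Hm Pm).
  - exists n. split; auto. intros m Hm Pm. apply No. eauto.
Qed.

Lemma flip_neq c : flip c <> c.
Proof. destruct c; discriminate. Qed.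

Definition ext eps k (x : list letter) : letter :=
  if excluded_middle_informative (exists j, x ++ [H] = factor eps j (S k)) then H else V.

Lemma ext_ok eps k x : (exists j, x = factor eps j k) -> exists j', x ++ [ext eps k x] = factor eps j' (S k).
Proof.
  intros [j Hj]. unfold ext. destruct (excluded_middle_informative _) as [Y|N]; auto.
  exists j. rewrite factor_snoc, <- Hj. destruct (eps (j + Z.of_nat k)%Z) eqn:E; auto.
  exfalso. apply N. exists j. rewrite factor_snoc, <- Hj, E. reflexivity.
Qed.

Lemma rs_unique eps (C : complexity_n_plus_1 eps) k p1 p2 q1 q2 :
  factor eps p1 k = factor eps p2 k -> eps (p1 + Z.of_nat k)%Z <> eps (p2 + Z.of_nat k)%Z ->
  factor eps q1 k = factor eps q2 k -> eps (q1 + Z.of_nat k)%Z <> eps (q2 + Z.of_nat k)%Z ->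
  factor eps p1 k = factor eps q1 k.
Proof.
  intros Ep Dp Eq Dq. apply NNPP. intros Hne.
  set (u := factor eps p1 k) in *. set (w := factor eps q1 k) in *.
  destruct (C k) as [sk [NDk [Lk Ink]]]. destruct (C (S k)) as [sk1 [ND1 [L1 In1]]].
  assert (AllU : forall c, exists j, u ++ [c] = factor eps j (S k)).
  { intros c. destruct (letter_two _ _ c Dp) as [e|e].
    - exists p1. rewrite factor_snoc. subst u. rewrite e. reflexivity.
    - exists p2. rewrite factor_snoc. subst u. rewrite e, Ep. reflexivity. }
  assert (AllW : forall c, exists j, w ++ [c] = factor eps j (S k)).
  { intros c. destruct (letter_two _ _ c Dq) as [e|e].
    - exists q1. rewrite factor_snoc. subst w. rewrite e. reflexivity.
    - exists q2. rewrite factor_snoc. subst w. rewrite e, Eq. reflexivity. }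
  set (f := fun x => x ++ [ext eps k x]).
  set (L := (u ++ [flip (ext eps k u)]) :: (w ++ [flip (ext eps k w)]) :: map f sk).
  assert (NDm : NoDup (map f sk)).
  { apply NoDup_map_NoDup_ForallPairs; auto. intros a b _ _ Eab.
    unfold f in Eab. apply app_inj_tail in Eab. tauto. }
  assert (notin : forall x, ~ In (x ++ [flip (ext eps k x)]) (map f sk)).
  { intros x Hx. apply in_map_iff in Hx. destruct Hx as [y [Ey _]]. unfold f in Ey.
    apply app_inj_tail in Ey. destruct Ey as [-> Ee]. symmetry in Ee. exact (flip_neq _ Ee). }
  assert (ND : NoDup L).
  { constructor.
    - intros [E|E].
      + apply app_inj_tail in E. destruct E as [E _]. apply Hne. symmetry. exact E.
      + exact (notin u E).
    - constructor; auto. }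
  assert (Inc : incl L sk1).
  { intros x Hx. apply In1. destruct Hx as [<-|[<-|Hx]].
    - destruct (AllU (flip (ext eps k u))) as [j Hj]. eauto.
    - destruct (AllW (flip (ext eps k w))) as [j Hj]. eauto.
    - apply in_map_iff in Hx. destruct Hx as [y [<- Hy]]. apply Ink in Hy.
      destruct (ext_ok eps k y Hy) as [j Hj]. exists j. exact Hj. }
  pose proof (NoDup_incl_length ND Inc) as HL. unfold L in HL. simpl in HL.
  rewrite length_map in HL. lia.
Qed.

Definition Srec (eps : bseq) (S : Z -> Z) := forall n, S (n+1)%Z = (S n + vl (eps n))%Z.

Lemma wsum eps S (HS : Srec eps S) x y (n : nat) :
  (forall t, (t < n)%nat -> eps (x + Z.of_nat t)%Z = eps (y + Z.of_nat t)%Z) ->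
  (S (x + Z.of_nat n) - S x = S (y + Z.of_nat n) - S y)%Z.
Proof.
  induction n as [|n IHn]; intros E.
  - simpl. rewrite !Z.add_0_r. lia.
  - rewrite Nat2Z.inj_succ. replace (x + Z.succ (Z.of_nat n))%Z with ((x + Z.of_nat n) + 1)%Z by lia.
    replace (y + Z.succ (Z.of_nat n))%Z with ((y + Z.of_nat n) + 1)%Z by lia.
    rewrite !HS. rewrite (E n) by lia. assert (IH := IHn (fun t Ht => E t ltac:(lia))). lia.
Qed.

Lemma wrange eps S (HS : Srec eps S) x (n : nat) : (0 <= S (x + Z.of_nat n) - S x <= Z.of_nat n)%Z.
Proof.
  induction n as [|n IHn].
  - simpl. rewrite Z.add_0_r. lia.
  - rewrite Nat2Z.inj_succ. replace (x + Z.succ (Z.of_nat n))%Z with ((x + Z.of_nat n) + 1)%Z by lia.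
    rewrite HS. pose proof (vl_range (eps (x + Z.of_nat n)%Z)). lia.
Qed.

Definition rsw eps k x := exists y, factor eps x k = factor eps y k /\ eps (x + Z.of_nat k)%Z <> eps (y + Z.of_nat k)%Z.

Lemma lemD eps (NP : ~ eventually_periodic eps) (C : complexity_n_plus_1 eps) k (Hk : (1 <= k)%nat) K :
  exists p, (K <= p)%Z /\ rsw eps k p.
Proof.
  apply NNPP. intros No.
  assert (Det : forall p y, (K <= p)%Z -> factor eps p k = factor eps y k -> eps (p + Z.of_nat k)%Z = eps (y + Z.of_nat k)%Z).
  { intros p y Hp E. apply NNPP. intros D. apply No. exists p. split; auto. exists y. auto. }
  destruct (C k) as [sk [NDk [Lk Ink]]].
  destruct (PH (fun i => factor eps (K + Z.of_nat i)%Z k) sk (S k) Lk) as [i [j [Hij Eij]]].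
  { intros i _. apply Ink. eauto. }
  set (a := (K + Z.of_nat i)%Z) in *. set (b := (K + Z.of_nat j)%Z) in *.
  assert (W : forall n : nat, factor eps (a + Z.of_nat n)%Z k = factor eps (b + Z.of_nat n)%Z k).
  { induction n as [|n IHn].
    - simpl. rewrite !Z.add_0_r. exact Eij.
    - rewrite Nat2Z.inj_succ. replace (a + Z.succ (Z.of_nat n))%Z with ((a + Z.of_nat n) + 1)%Z by lia.
      replace (b + Z.succ (Z.of_nat n))%Z with ((b + Z.of_nat n) + 1)%Z by lia.
      apply win_shift; auto. symmetry. apply Det. unfold b; lia. auto. }
  apply NP. exists (b - a)%Z, a. split. { unfold a, b; lia. }
  intros n Hn. specialize (W (Z.to_nat (n - a))). rewrite factor_eq_pw in W.
  specialize (W 0%nat Hk). rewrite Z2Nat.id in W by lia. simpl in W.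
  replace (a + (n - a) + 0)%Z with n in W by lia.
  replace (b + (n - a) + 0)%Z with (n + (b - a))%Z in W by lia. auto.
Qed.

Lemma two_neq (a b c : letter) : a <> c -> b <> c -> a = b.
Proof. destruct a, b, c; congruence. Qed.

Definition balL (S : Z -> Z) (L : nat) := forall i j, (S (i + Z.of_nat L) - S i - (S (j + Z.of_nat L) - S j) <= 1)%Z.

Lemma core eps S (HS : Srec eps S) (NP : ~ eventually_periodic eps) (C : complexity_n_plus_1 eps)
  k (Hk : (1 <= k)%nat) (IH : forall L', (L' < Datatypes.S k)%nat -> balL S L') p p' q :
  factor eps p k = factor eps p' k -> eps (p + Z.of_nat k)%Z <> eps (p' + Z.of_nat k)%Z ->
  eps q <> eps p -> (forall t, (1 <= t < Z.of_nat k)%Z -> eps (q + t)%Z = eps (p + t)%Z) ->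
  eps (q + Z.of_nat k)%Z = eps q -> False.
Proof.
  intros Ep Dp Nq Tq Lq.
  set (r := factor eps p k).
  assert (Det : forall x y, factor eps x k = factor eps y k -> factor eps x k <> r ->
                 eps (x + Z.of_nat k)%Z = eps (y + Z.of_nat k)%Z).
  { intros x y Exy Nr. apply NNPP. intros D. apply Nr.
    symmetry. unfold r. eapply rs_unique; eauto. }
  assert (first : forall x, factor eps x k = r -> eps x = eps p).
  { intros x Ex. unfold r in Ex. rewrite factor_eq_pw in Ex. specialize (Ex 0%nat Hk).
    simpl in Ex. rewrite !Z.add_0_r in Ex. auto. }
  assert (Q2 : factor eps q k <> r). { intros E. apply Nq. apply first; auto. }
  assert (Q3 : factor eps (q+1) k <> r).
  { intros E. unfold r in E. rewrite factor_eq_pw in E.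
    assert (A : forall t, (t < k)%nat -> eps (q + 1 + Z.of_nat t)%Z = eps p).
    { induction t as [|t IHt]; intros Ht.
      - specialize (E 0%nat Hk). simpl in *. rewrite !Z.add_0_r in *. auto.
      - rewrite <- (IHt ltac:(lia)). rewrite E by lia.
        replace (q + 1 + Z.of_nat t)%Z with (q + (Z.of_nat t + 1))%Z by lia.
        rewrite Tq by lia. f_equal. lia. }
    specialize (A (k-1)%nat ltac:(lia)).
    replace (q + 1 + Z.of_nat (k-1))%Z with (q + Z.of_nat k)%Z in A by lia.
    congruence. }
  assert (Dp' : forall K, exists x, (K <= x)%Z /\ factor eps x k = r).
  { intros K. destruct (lemD eps NP C k Hk K) as [x [Hx [y [Exy Dxy]]]].
    exists x. split; auto. unfold r. symmetry. eapply rs_unique; eauto. }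
  assert (Before : exists x, (x < q)%Z /\ factor eps x k = r).
  { apply NNPP. intros No.
    destruct (C k) as [sk [NDk [Lk Ink]]].
    destruct (PH (fun i => factor eps (q - Z.of_nat (Datatypes.S k) + Z.of_nat i)%Z k) sk (Datatypes.S k) Lk)
      as [i [j [Hij Eij]]].
    { intros i _. apply Ink. eauto. }
    set (a := (q - Z.of_nat (Datatypes.S k) + Z.of_nat i)%Z) in *.
    set (b := (q - Z.of_nat (Datatypes.S k) + Z.of_nat j)%Z) in *.
    assert (notr : forall x, (x <= q)%Z -> factor eps x k <> r).
    { intros x Hx E. destruct (Z.eq_dec x q) as [->|ne]; [auto|]. apply No. exists x. split; auto; lia. }
    destruct (Dp' b) as [x0 [Hx0 Ex0]].
    destruct (nat_min (fun n => factor eps (b + Z.of_nat n)%Z k = r)) as [n0 [Hn0 Mn0]].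
    { exists (Z.to_nat (x0 - b)). rewrite Z2Nat.id by lia. replace (b + (x0 - b))%Z with x0 by lia. auto. }
    assert (W : forall n : nat, (n <= n0)%nat -> factor eps (a + Z.of_nat n)%Z k = factor eps (b + Z.of_nat n)%Z k).
    { induction n as [|n IHn]; intros Hn.
      - simpl. rewrite !Z.add_0_r. exact Eij.
      - rewrite Nat2Z.inj_succ. replace (a + Z.succ (Z.of_nat n))%Z with ((a + Z.of_nat n) + 1)%Z by lia.
        replace (b + Z.succ (Z.of_nat n))%Z with ((b + Z.of_nat n) + 1)%Z by lia.
        apply win_shift; auto. { apply IHn; lia. } symmetry. apply Det.
        + symmetry. apply IHn; lia.
        + apply (Mn0 n). lia. }
    specialize (W n0 (le_n _)). rewrite Hn0 in W.
    destruct (Z_le_gt_dec b (a + Z.of_nat n0)) as [Hge|Hlt].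
    + apply (Mn0 (Z.to_nat (a + Z.of_nat n0 - b))). { unfold a, b in *. lia. }
      rewrite Z2Nat.id by lia. replace (b + (a + Z.of_nat n0 - b))%Z with (a + Z.of_nat n0)%Z by lia. auto.
    + apply (notr (a + Z.of_nat n0)%Z). { unfold b in Hlt. lia. } auto. }
  destruct Before as [x [Hx Ex]].
  destruct (nat_min (fun n => factor eps (q - 1 - Z.of_nat n)%Z k = r)) as [n0 [Hn0 Mn0]].
  { exists (Z.to_nat (q - 1 - x)). rewrite Z2Nat.id by lia. replace (q - 1 - (q - 1 - x))%Z with x by lia. auto. }
  set (i0 := (q - 1 - Z.of_nat n0)%Z) in *.
  destruct (Dp' (q+1)%Z) as [x1 [Hx1 Ex1]].
  destruct (nat_min (fun n => factor eps (q + 1 + Z.of_nat n)%Z k = r)) as [n1 [Hn1 Mn1]].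
  { exists (Z.to_nat (x1 - q - 1)). rewrite Z2Nat.id by lia. replace (q + 1 + (x1 - q - 1))%Z with x1 by lia. auto. }
  set (i1 := (q + 1 + Z.of_nat n1)%Z) in *.
  assert (Gap : forall y, (i0 < y < i1)%Z -> factor eps y k <> r).
  { intros y Hy E. destruct (Z_le_gt_dec y q) as [Hle|Hgt].
    - destruct (Z.eq_dec y q) as [->|ne]; [auto|].
      apply (Mn0 (Z.to_nat (q - 1 - y))). { unfold i0 in Hy; lia. }
      rewrite Z2Nat.id by lia. replace (q - 1 - (q - 1 - y))%Z with y by lia. auto.
    - apply (Mn1 (Z.to_nat (y - q - 1))). { unfold i1 in Hy; lia. }
      rewrite Z2Nat.id by lia. replace (q + 1 + (y - q - 1))%Z with y by lia. auto. }
  assert (Dist : forall x y, (i0 <= x < y)%Z -> (y < i1)%Z -> factor eps x k <> factor eps y k).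
  { intros x' y Hxy Hy Exy.
    assert (W : forall n : nat, (y + Z.of_nat n <= i1)%Z -> factor eps (x' + Z.of_nat n)%Z k = factor eps (y + Z.of_nat n)%Z k).
    { induction n as [|n IHn]; intros Hn.
      - simpl. rewrite !Z.add_0_r. exact Exy.
      - rewrite Nat2Z.inj_succ in *. replace (x' + Z.succ (Z.of_nat n))%Z with ((x' + Z.of_nat n) + 1)%Z by lia.
        replace (y + Z.succ (Z.of_nat n))%Z with ((y + Z.of_nat n) + 1)%Z by lia.
        apply win_shift; auto. { apply IHn; lia. } symmetry. apply Det.
        + symmetry. apply IHn; lia.
        + apply Gap. lia. }
    specialize (W (Z.to_nat (i1 - y)) ltac:(lia)). rewrite Z2Nat.id in W by lia.
    replace (y + (i1 - y))%Z with i1 in W by lia. rewrite Hn1 in W.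
    apply (Gap (x' + (i1 - y))%Z). lia. auto. }
  assert (Len : (i1 - i0 <= Z.of_nat (Datatypes.S k))%Z).
  { apply Z.nlt_ge. intros Hlt.
    destruct (C k) as [sk [NDk [Lk Ink]]].
    destruct (PH (fun i => factor eps (i0 + Z.of_nat i)%Z k) sk (Datatypes.S k) Lk) as [i [j [Hij Eij]]].
    { intros i _. apply Ink. eauto. }
    apply (Dist (i0 + Z.of_nat i)%Z (i0 + Z.of_nat j)%Z); auto; lia. }
  assert (Hq1 : (q + 1 < i1)%Z).
  { destruct (Z.eq_dec (q+1) i1) as [e|ne]. { exfalso. apply Q3. rewrite e. auto. } unfold i1 in *; lia. }
  assert (L11 : eps (i0 + Z.of_nat k)%Z <> eps (q + Z.of_nat k)%Z).
  { intros E. apply (Dist (i0 + 1)%Z (q+1)%Z); try (unfold i0; lia).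
    apply factor_eq_pw. intros t Ht. destruct (Nat.eq_dec (Datatypes.S t) k) as [e|ne].
    - subst k. replace (i0 + 1 + Z.of_nat t)%Z with (i0 + Z.of_nat (Datatypes.S t))%Z by lia.
      replace (q + 1 + Z.of_nat t)%Z with (q + Z.of_nat (Datatypes.S t))%Z by lia. auto.
    - assert (Ei0 := Hn0). fold i0 in Ei0. unfold r in Ei0. rewrite factor_eq_pw in Ei0.
      replace (i0 + 1 + Z.of_nat t)%Z with (i0 + Z.of_nat (Datatypes.S t))%Z by lia.
      rewrite Ei0 by lia. replace (q + 1 + Z.of_nat t)%Z with (q + (Z.of_nat t + 1))%Z by lia.
      rewrite Tq by lia. f_equal; lia. }
  assert (Ei0 := Hn0). fold i0 in Ei0.
  assert (F0 : eps i0 = eps p) by (apply first; auto).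
  assert (Lk0 : eps (i0 + Z.of_nat k)%Z = eps i0).
  { apply (two_neq _ _ (eps q)). rewrite <- Lq. auto. rewrite F0. intro e; apply Nq; auto. }
  assert (Mid : (S (i0 + Z.of_nat k) - S (i0 + 1) = S (q + Z.of_nat k) - S (q + 1))%Z).
  { pose proof (wsum eps S HS (i0+1) (q+1) (k-1)) as WS.
    replace (i0 + 1 + Z.of_nat (k-1))%Z with (i0 + Z.of_nat k)%Z in WS by lia.
    replace (q + 1 + Z.of_nat (k-1))%Z with (q + Z.of_nat k)%Z in WS by lia.
    apply WS. intros t Ht. unfold r in Ei0. rewrite factor_eq_pw in Ei0.
    replace (i0 + 1 + Z.of_nat t)%Z with (i0 + Z.of_nat (Datatypes.S t))%Z by lia.
    rewrite Ei0 by lia. replace (q + 1 + Z.of_nat t)%Z with (q + (Z.of_nat t + 1))%Z by lia.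
    rewrite Tq by lia. f_equal; lia. }
  assert (WL : forall x, (S (x + Z.of_nat k + 1) - S x = vl (eps x) + (S (x + Z.of_nat k) - S (x + 1)) + vl (eps (x + Z.of_nat k)))%Z).
  { intros x0. rewrite HS, HS. lia. }
  assert (Diff : (S (i0 + Z.of_nat k + 1) - S i0 - (S (q + Z.of_nat k + 1) - S q) = 2 * (vl (eps i0) - vl (eps q)))%Z).
  { rewrite (WL i0), (WL q). rewrite Lk0, Lq. lia. }
  assert (D2 : (vl (eps i0) - vl (eps q) = 1 \/ vl (eps i0) - vl (eps q) = -1)%Z).
  { rewrite F0. destruct (eps p), (eps q); simpl; try lia; congruence. }
  set (d := (i1 - i0)%Z).
  assert (Per : forall t : nat, (t < k)%nat -> eps (i0 + Z.of_nat t)%Z = eps (i0 + d + Z.of_nat t)%Z).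
  { intros t Ht. unfold r in Hn1, Ei0. rewrite <- Hn1 in Ei0. rewrite factor_eq_pw in Ei0.
    rewrite Ei0 by auto. f_equal. unfold d, i1. lia. }
  assert (Cst : forall n : nat, (n <= k)%nat -> (S (i0 + Z.of_nat n + d) - S (i0 + Z.of_nat n) = S (i0 + d) - S i0)%Z).
  { induction n as [|n IHn]; intros Hn.
    - simpl. rewrite Z.add_0_r. lia.
    - rewrite Nat2Z.inj_succ. replace (i0 + Z.succ (Z.of_nat n) + d)%Z with ((i0 + Z.of_nat n + d) + 1)%Z by lia.
      replace (i0 + Z.succ (Z.of_nat n))%Z with ((i0 + Z.of_nat n) + 1)%Z by lia.
      rewrite !HS. rewrite (Per n) by lia. replace (i0 + d + Z.of_nat n)%Z with (i0 + Z.of_nat n + d)%Z by lia.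
      specialize (IHn ltac:(lia)). lia. }
  assert (Cq : (S (q + d) - S q = S (i0 + d) - S i0)%Z).
  { specialize (Cst (Z.to_nat (q - i0)) ltac:(unfold i0 in *; lia)). rewrite Z2Nat.id in Cst by (unfold i0; lia).
    replace (i0 + (q - i0))%Z with q in Cst by lia. auto. }
  set (L' := (Datatypes.S k - Z.to_nat d)%nat).
  assert (HL' : (L' < Datatypes.S k)%nat) by (unfold L', d, i1, i0 in *; lia).
  assert (ZL' : Z.of_nat L' = (Z.of_nat k + 1 - d)%Z) by (unfold L', d, i1, i0 in *; lia).
  pose proof (IH L' HL' (q + d)%Z (i0 + d)%Z) as B1.
  pose proof (IH L' HL' (i0 + d)%Z (q + d)%Z) as B2.
  rewrite ZL' in B1, B2.
  replace (q + d + (Z.of_nat k + 1 - d))%Z with (q + Z.of_nat k + 1)%Z in B1, B2 by lia.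
  replace (i0 + d + (Z.of_nat k + 1 - d))%Z with (i0 + Z.of_nat k + 1)%Z in B1, B2 by lia.
  lia.
Qed.

Lemma vl_one a : vl a = 1%Z -> a = V.
Proof. destruct a; simpl; congruence. Qed.
Lemma vl_zero a : vl a = 0%Z -> a = H.
Proof. destruct a; simpl; congruence. Qed.

Theorem balanced eps S (HS : Srec eps S) (NP : ~ eventually_periodic eps) (C : complexity_n_plus_1 eps) :
  forall L, balL S L.
Proof.
  intros L. induction L as [L IH] using (well_founded_induction lt_wf).
  intros i j. apply Z.nlt_ge. intros Hgt.
  destruct L as [|[|k]].
  - simpl in Hgt. rewrite !Z.add_0_r in Hgt. lia.
  - pose proof (wrange eps S HS i 1). pose proof (wrange eps S HS j 1). simpl in *. lia.
  - set (L := Datatypes.S (Datatypes.S k)) in *.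
    set (d := fun t : Z => ((S (i + t) - S i) - (S (j + t) - S j))%Z).
    assert (dL : (d (Z.of_nat L) >= 2)%Z) by (unfold d; lia).
    assert (dt : forall t, (1 <= t <= Z.of_nat (Datatypes.S k))%Z -> d t = 1%Z).
    { intros t Ht.
      pose proof (IH (Z.to_nat t) ltac:(unfold L; lia) i j) as B1.
      pose proof (IH (Z.to_nat (Z.of_nat L - t)) ltac:(unfold L; lia) (i + t)%Z (j + t)%Z) as B2.
      rewrite Z2Nat.id in B1, B2 by (unfold L in *; lia).
      replace (i + t + (Z.of_nat L - t))%Z with (i + Z.of_nat L)%Z in B2 by lia.
      replace (j + t + (Z.of_nat L - t))%Z with (j + Z.of_nat L)%Z in B2 by lia.
      unfold d in *. lia. }
    assert (dstep : forall t, (d (t+1) - d t = vl (eps (i+t)) - vl (eps (j+t)))%Z).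
    { intros t. unfold d. replace (i + (t+1))%Z with (i + t + 1)%Z by lia.
      replace (j + (t+1))%Z with (j + t + 1)%Z by lia. rewrite !HS. lia. }
    assert (d0 : d 0%Z = 0%Z) by (unfold d; rewrite !Z.add_0_r; lia).
    assert (Ei : eps i = V /\ eps j = H).
    { pose proof (dstep 0%Z) as X. rewrite d0 in X. simpl in X. rewrite dt in X by lia.
      rewrite !Z.add_0_r in X. pose proof (vl_range (eps i)). pose proof (vl_range (eps j)).
      split; [apply vl_one|apply vl_zero]; lia. }
    assert (Emid : forall t, (1 <= t <= Z.of_nat k)%Z -> eps (i + t)%Z = eps (j + t)%Z).
    { intros t Ht. apply vl_inj. pose proof (dstep t) as X. rewrite !dt in X by lia. lia. }
    assert (Eend : eps (i + Z.of_nat (Datatypes.S k))%Z = V /\ eps (j + Z.of_nat (Datatypes.S k))%Z = H).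
    { pose proof (dstep (Z.of_nat (Datatypes.S k))) as X.
      replace (Z.of_nat (Datatypes.S k) + 1)%Z with (Z.of_nat L) in X by (unfold L; lia).
      rewrite (dt (Z.of_nat (Datatypes.S k))) in X by lia.
      pose proof (vl_range (eps (i + Z.of_nat (Datatypes.S k))%Z)). pose proof (vl_range (eps (j + Z.of_nat (Datatypes.S k))%Z)).
      assert (d (Z.of_nat L) <= 2)%Z by lia.
      split; [apply vl_one|apply vl_zero]; lia. }
    set (k1 := Datatypes.S k) in *.
    destruct (lemD eps NP C k1 ltac:(unfold k1; lia) 0%Z) as [p [_ [p' [Ep Dp]]]].
    assert (Tail : forall t, (1 <= t < Z.of_nat k1)%Z -> eps (p + t)%Z = eps (i + t)%Z).
    { assert (U : factor eps (p+1) k = factor eps (i+1) k).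
      { eapply rs_unique with (p2 := (p'+1)%Z) (q2 := (j+1)%Z); auto.
        - rewrite factor_eq_pw in *. intros t Ht.
          replace (p + 1 + Z.of_nat t)%Z with (p + Z.of_nat (Datatypes.S t))%Z by lia.
          replace (p' + 1 + Z.of_nat t)%Z with (p' + Z.of_nat (Datatypes.S t))%Z by lia.
          apply Ep. unfold k1; lia.
        - replace (p + 1 + Z.of_nat k)%Z with (p + Z.of_nat k1)%Z by (unfold k1; lia).
          replace (p' + 1 + Z.of_nat k)%Z with (p' + Z.of_nat k1)%Z by (unfold k1; lia). auto.
        - rewrite factor_eq_pw. intros t Ht.
          replace (i + 1 + Z.of_nat t)%Z with (i + (Z.of_nat t + 1))%Z by lia.
          replace (j + 1 + Z.of_nat t)%Z with (j + (Z.of_nat t + 1))%Z by lia.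
          apply Emid. lia.
        - replace (i + 1 + Z.of_nat k)%Z with (i + Z.of_nat k1)%Z by (unfold k1; lia).
          replace (j + 1 + Z.of_nat k)%Z with (j + Z.of_nat k1)%Z by (unfold k1; lia).
          destruct Eend as [-> ->]. discriminate. }
      intros t Ht. rewrite factor_eq_pw in U. specialize (U (Z.to_nat (t - 1)) ltac:(unfold k1 in Ht; lia)).
      rewrite Z2Nat.id in U by lia.
      replace (p + 1 + (t - 1))%Z with (p + t)%Z in U by lia.
      replace (i + 1 + (t - 1))%Z with (i + t)%Z in U by lia. auto. }
    assert (Hk1 : (1 <= k1)%nat) by (unfold k1; lia).
    assert (IH' : forall L', (L' < Datatypes.S k1)%nat -> balL S L') by (intros; apply IH; auto).
    destruct (eps p) eqn:Epp.
    + apply (core eps S HS NP C k1 Hk1 IH' p p' i Ep Dp).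
      * rewrite Epp, (proj1 Ei). discriminate.
      * intros t Ht. symmetry. apply Tail; auto.
      * rewrite (proj1 Eend), (proj1 Ei). reflexivity.
    + apply (core eps S HS NP C k1 Hk1 IH' p p' j Ep Dp).
      * rewrite Epp, (proj2 Ei). discriminate.
      * intros t Ht. rewrite Tail by auto. symmetry. apply Emid. unfold k1 in Ht. lia.
      * rewrite (proj2 Eend), (proj2 Ei). reflexivity.
Qed.

Open Scope R_scope.

Definition WL (S : Z -> Z) i (L : nat) := (S (i + Z.of_nat L) - S i)%Z.

Lemma WL_add S i (a b : nat) : WL S i (a + b) = (WL S i a + WL S (i + Z.of_nat a) b)%Z.
Proof. unfold WL. rewrite Nat2Z.inj_add. replace (i + Z.of_nat a + Z.of_nat b)%Z with (i + (Z.of_nat a + Z.of_nat b))%Z by lia. lia. Qed.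

Lemma blocks S (B : forall L, balL S L) (a b : nat) i x :
  (Z.of_nat b * (WL S x a - 1) <= WL S i (a * b) <= Z.of_nat b * (WL S x a + 1))%Z.
Proof.
  revert i. induction b as [|b IHb]; intros i.
  - unfold WL. rewrite Nat.mul_0_r. simpl. rewrite Z.add_0_r. lia.
  - rewrite Nat.mul_succ_r, WL_add. specialize (IHb i).
    pose proof (B a x (i + Z.of_nat (a * b))%Z) as B1. pose proof (B a (i + Z.of_nat (a * b))%Z x) as B2.
    unfold WL in *. rewrite Nat2Z.inj_succ. lia.
Qed.

Lemma cross S (B : forall L, balL S L) (L L' : nat) i i' :
  (Z.of_nat L' * (WL S i L - 1) <= Z.of_nat L * (WL S i' L' + 1))%Z.
Proof.
  pose proof (blocks S B L L' 0%Z i) as [X _].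
  pose proof (blocks S B L' L 0%Z i') as [_ Y].
  rewrite Nat.mul_comm in Y. lia.
Qed.

Lemma divle a b c : 0 < c -> a <= b * c -> a / c <= b.
Proof. intros Hc Hab. unfold Rdiv. apply Rmult_le_reg_r with c; auto.
  rewrite Rmult_assoc, Rinv_l by lra. lra. Qed.
Lemma ledivmul a b c : 0 < c -> a <= b / c -> c * a <= b.
Proof. intros Hc Hab. apply Rmult_le_compat_l with (r := c) in Hab; [|lra].
  unfold Rdiv in Hab. rewrite <- Rmult_assoc, (Rmult_comm c b), Rmult_assoc, Rinv_r in Hab by lra. lra. Qed.
Lemma divlemul a b c : 0 < c -> a / c <= b -> a <= c * b.
Proof. intros Hc Hab. apply Rmult_le_compat_l with (r := c) in Hab; [|lra].
  unfold Rdiv in Hab. rewrite (Rmult_comm a), <- Rmult_assoc, Rinv_r in Hab by lra. lra. Qed.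

Definition Aset S : R -> Prop := fun x => exists (L : nat) i, (1 <= L)%nat /\ x = (IZR (WL S i L) - 1) / INR L.

Lemma alpha_exists S (B : forall L, balL S L) :
  { a : R | forall (L : nat) i, (1 <= L)%nat -> IZR (WL S i L) - 1 <= INR L * a <= IZR (WL S i L) + 1 }.
Proof.
  destruct (completeness (Aset S)) as [a [Ub Lub]].
  - exists (IZR (WL S 0 1) + 1). intros x [L [i [HL ->]]].
    pose proof (cross S B L 1 i 0%Z) as X. rewrite Z.mul_1_l in X.
    apply divle. { apply lt_0_INR; lia. }
    rewrite INR_IZR_INZ. rewrite <- minus_IZR, <- plus_IZR, <- mult_IZR. apply IZR_le.
    nia.
  - exists ((IZR (WL S 0 1) - 1) / INR 1). exists 1%nat, 0%Z. split; auto.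
  - exists a. intros L i HL. assert (HL0 : 0 < INR L) by (apply lt_0_INR; lia). split.
    + assert (Hx : Aset S ((IZR (WL S i L) - 1) / INR L)) by (exists L, i; auto).
      specialize (Ub _ Hx). apply divlemul; auto.
    + assert (UB : is_upper_bound (Aset S) ((IZR (WL S i L) + 1) / INR L)).
      { intros x [L' [i' [HL' ->]]].
        assert (HL0' : 0 < INR L') by (apply lt_0_INR; lia).
        pose proof (cross S B L' L i' i) as X.
        apply IZR_le in X. rewrite !mult_IZR, minus_IZR, plus_IZR in X. rewrite <- !INR_IZR_INZ in X.
        apply divle; auto. unfold Rdiv. rewrite Rmult_assoc, (Rmult_comm (/ INR L)).
        rewrite <- Rmult_assoc. apply Rmult_le_reg_r with (INR L); auto.
        rewrite Rmult_assoc, Rinv_l by lra. lra. }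
      specialize (Lub _ UB). apply ledivmul; auto.
Qed.

Lemma intbound (w z : Z) : IZR w - 1 <= IZR z <= IZR w + 1 -> (w - 1 <= z <= w + 1)%Z.
Proof.
  intros [A B]. rewrite <- minus_IZR in A. rewrite <- plus_IZR in B.
  apply le_IZR in A. apply le_IZR in B. lia.
Qed.

Lemma Fbound S a (Ha : forall (L : nat) i, (1 <= L)%nat -> IZR (WL S i L) - 1 <= INR L * a <= IZR (WL S i L) + 1) :
  forall i j, Rabs ((IZR (S j) - a * IZR j) - (IZR (S i) - a * IZR i)) <= 1.
Proof.
  assert (K : forall i j, (i <= j)%Z -> Rabs ((IZR (S j) - a * IZR j) - (IZR (S i) - a * IZR i)) <= 1).
  { intros i j Hij. destruct (Z.eq_dec i j) as [->|ne].
    - rewrite Rminus_diag, Rabs_R0. lra.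
    - specialize (Ha (Z.to_nat (j - i)) i ltac:(lia)). unfold WL in Ha.
      rewrite Z2Nat.id in Ha by lia. replace (i + (j - i))%Z with j in Ha by lia.
      rewrite INR_IZR_INZ, Z2Nat.id in Ha by lia. rewrite minus_IZR in *.
      rewrite minus_IZR in Ha. apply Rabs_le. split; nra. }
  intros i j. destruct (Z_le_gt_dec i j) as [l|g]; auto.
  rewrite Rabs_minus_sym. apply K. lia.
Qed.

Lemma alpha_irrational eps S (HS : Srec eps S) (NP : ~ eventually_periodic eps) (B : forall L, balL S L) a
  (Ha : forall (L : nat) i, (1 <= L)%nat -> IZR (WL S i L) - 1 <= INR L * a <= IZR (WL S i L) + 1) :
  irrational a.
Proof.
  assert (Main : forall p q, (0 < q)%Z -> IZR q * a <> IZR p).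
  { intros p q Hq Eq.
    set (Q := Z.to_nat q).
    assert (HQ : forall (n : nat) i, (1 <= n)%nat -> (Z.of_nat n * p - 1 <= WL S i (n * Q) <= Z.of_nat n * p + 1)%Z).
    { intros n i Hn. apply intbound. specialize (Ha (n * Q)%nat i ltac:(unfold Q; nia)).
      rewrite mult_INR in Ha. rewrite (INR_IZR_INZ Q) in Ha. unfold Q in Ha. rewrite Z2Nat.id in Ha by lia.
      rewrite Rmult_assoc, Eq in Ha. rewrite mult_IZR, <- INR_IZR_INZ. fold Q in Ha. lra. }
    set (g := fun x => (WL S x Q - p)%Z).
    assert (G1 : forall x, (-1 <= g x <= 1)%Z).
    { intros x. specialize (HQ 1%nat x (le_n _)). rewrite Nat.mul_1_l in HQ. unfold g. lia. }
    assert (Inf : forall K, exists t, (K <= t)%Z /\ g t <> 0%Z).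
    { intros K. apply NNPP. intros No. apply NP. exists q, K. split; auto. intros n Hn.
      assert (Z0 : forall t, (K <= t)%Z -> g t = 0%Z).
      { intros t Ht. apply NNPP. intros Nz. apply No. eauto. }
      apply vl_inj. pose proof (Z0 n Hn) as A1. pose proof (Z0 (n+1)%Z ltac:(lia)) as A2.
      unfold g, WL in A1, A2. unfold Q in *. rewrite Z2Nat.id in A1, A2 by lia.
      replace (n + 1 + q)%Z with ((n + q) + 1)%Z in A2 by lia. rewrite !HS in A2. lia. }
    set (nxt := fun K => proj1_sig (constructive_indefinite_description _ (Inf K))).
    assert (Nxt : forall K, (K <= nxt K)%Z /\ g (nxt K) <> 0%Z).
    { intros K. unfold nxt. destruct (constructive_indefinite_description _ (Inf K)); auto. }
    set (ts := fix ts (n : nat) : Z := match n with O => nxt 0%Z | Datatypes.S n => nxt (ts n + 1)%Z end).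
    assert (Tnz : forall n, g (ts n) <> 0%Z).
    { intros [|n]; simpl; apply Nxt. }
    assert (Tinc : forall n m, (n < m)%nat -> (ts n < ts m)%Z).
    { intros n m Hnm. induction Hnm.
      - simpl. pose proof (Nxt (ts n + 1)%Z). lia.
      - simpl. pose proof (Nxt (ts m + 1)%Z). lia. }
    destruct (PH (fun n => Z.to_nat (ts n mod q)) (seq 0 Q) Q (length_seq _ _)) as [n1 [n2 [Hn Er]]].
    { intros i _. apply in_seq. pose proof (Z.mod_pos_bound (ts i) q Hq). unfold Q. lia. }
    set (x1 := ts n1) in *. set (x2 := ts n2) in *.
    assert (Hx : (x1 < x2)%Z) by (apply Tinc; lia).
    pose proof (Z.mod_pos_bound x1 q Hq). pose proof (Z.mod_pos_bound x2 q Hq).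
    assert (Em : (x1 mod q = x2 mod q)%Z) by (apply Z2Nat.inj; lia).
    pose proof (Z.div_mod x1 q ltac:(lia)). pose proof (Z.div_mod x2 q ltac:(lia)).
    set (kk := (x2 / q - x1 / q)%Z).
    assert (Ekk : (x2 = x1 + kk * q)%Z) by (unfold kk; lia).
    assert (Hkk : (1 <= kk)%Z) by (apply Z.nlt_ge; intro; assert (kk * q <= 0)%Z by (apply Z.mul_nonpos_nonneg; lia); lia).
    assert (Sg : g x1 = 1%Z \/ g x1 = (-1)%Z) by (pose proof (G1 x1); pose proof (Tnz n1) as T1; fold x1 in T1; lia).
    assert (SameAll : forall x, (g x1 * g x >= 0)%Z).
    { intros x. pose proof (G1 x). pose proof (B Q x1 x). pose proof (B Q x x1). unfold g, balL, WL in *.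
      destruct Sg as [E|E]; rewrite E; lia. }
    assert (Same2 : g x2 = g x1).
    { pose proof (SameAll x2). pose proof (G1 x2). pose proof (Tnz n2) as T2; fold x2 in T2. destruct Sg as [E|E]; rewrite E in *; lia. }
    assert (Blocks : forall (n : nat) x, (g x1 * (WL S x (n * Q) - Z.of_nat n * p) >= 0)%Z).
    { induction n as [|n IHn]; intros x.
      - unfold WL. simpl. rewrite Z.add_0_r. lia.
      - replace (Datatypes.S n * Q)%nat with (Q + n * Q)%nat by lia. rewrite WL_add.
        specialize (IHn (x + Z.of_nat Q)%Z). pose proof (SameAll x). unfold g in *.
        rewrite Nat2Z.inj_succ. destruct Sg as [E|E]; rewrite E in *; lia. }
    set (kn := Z.to_nat kk).
    specialize (HQ (Datatypes.S kn) x1 ltac:(lia)).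
    replace (Datatypes.S kn * Q)%nat with (Q + ((kn - 1) * Q + Q))%nat in HQ by (unfold kn; nia).
    rewrite !WL_add in HQ.
    specialize (Blocks (kn - 1)%nat (x1 + Z.of_nat Q)%Z).
    replace (x1 + Z.of_nat Q + Z.of_nat ((kn - 1) * Q))%Z with x2 in HQ
      by (unfold kn, Q; rewrite Nat2Z.inj_mul, Nat2Z.inj_sub, !Z2Nat.id by lia; simpl; lia).
    assert (Ex1 : g x1 = (WL S x1 Q - p)%Z) by reflexivity.
    assert (Ex2 : g x2 = (WL S x2 Q - p)%Z) by reflexivity.
    rewrite Nat2Z.inj_succ in HQ. rewrite Nat2Z.inj_sub in Blocks by (unfold kn; lia).
    destruct Sg as [E|E]; rewrite E in *; lia. }
  intros p q Hq Eq. destruct (Z.lt_trichotomy 0 q) as [pos|[e|neg]].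
  - apply (Main p q pos). rewrite Eq. field. apply not_0_IZR. auto.
  - lia.
  - apply (Main (-p)%Z (-q)%Z ltac:(lia)). rewrite Eq, !opp_IZR. field. apply not_0_IZR. auto.
Qed.

Lemma Rabs_le_inv x b : Rabs x <= b -> - b <= x <= b.
Proof. unfold Rabs. destruct (Rcase_abs x); intros; lra. Qed.

Fixpoint cnt (eps : bseq) (k : Z) (m : nat) : Z :=
  match m with O => 0%Z | Datatypes.S m' => (cnt eps k m' + vl (eps (k + Z.of_nat m')%Z))%Z end.

Lemma cnt_shift eps k m : cnt eps k (Datatypes.S m) = (vl (eps k) + cnt eps (k+1) m)%Z.
Proof.
  induction m as [|m IHm].
  - simpl. rewrite Z.add_0_r. lia.
  - change (cnt eps k (Datatypes.S (Datatypes.S m))) with (cnt eps k (Datatypes.S m) + vl (eps (k + Z.of_nat (Datatypes.S m))%Z))%Z.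
    rewrite IHm. cbn [cnt]. replace (k + 1 + Z.of_nat m)%Z with (k + Z.of_nat (Datatypes.S m))%Z by lia. lia.
Qed.

Definition Sf eps (n : Z) : Z := if (0 <=? n)%Z then cnt eps 0 (Z.to_nat n) else (- cnt eps n (Z.to_nat (-n)))%Z.

Lemma Sf_rec eps : Srec eps (Sf eps).
Proof.
  intros n. unfold Sf. destruct (Z.leb_spec 0 n) as [Hn|Hn].
  - destruct (Z.leb_spec 0 (n+1)) as [_|X]; [|lia].
    rewrite Z2Nat.inj_add by lia. rewrite Nat.add_1_r. simpl.
    rewrite Z2Nat.id by lia. reflexivity.
  - destruct (Z.leb_spec 0 (n+1)) as [X|X].
    + assert (n = -1)%Z by lia. subst. simpl. lia.
    + replace (Z.to_nat (-n)) with (Datatypes.S (Z.to_nat (-(n+1)))) by lia.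
      rewrite cnt_shift. lia.
Qed.

Definition Fv (S : Z -> Z) (a : R) (n : Z) : R := IZR (S n) - a * IZR n.

Lemma sturm_data eps : sturmian eps ->
  exists S a, Srec eps S /\ 0 < a < 1 /\ irrational a /\ (forall i j, Rabs (Fv S a j - Fv S a i) <= 1).
Proof.
  intros [NP C]. set (S := Sf eps). assert (HS : Srec eps S) by apply Sf_rec.
  pose proof (balanced eps S HS NP C) as B.
  destruct (alpha_exists S B) as [a Ha].
  pose proof (alpha_irrational eps S HS NP B a Ha) as Irr.
  pose proof (Fbound S a Ha) as Fb.
  exists S, a. split; auto. split; [|split; auto].
  assert (W : forall n, (0 <= n)%Z -> (0 <= S n - S 0 <= n)%Z).
  { intros n Hn. pose proof (wrange eps S HS 0 (Z.to_nat n)) as X. rewrite Z2Nat.id in X by lia. simpl in X. lia. }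
  assert (Fn : forall n, Rabs (IZR (S n) - a * IZR n - IZR (S 0%Z)) <= 1).
  { intros n. specialize (Fb 0%Z n). rewrite Rmult_0_r, Rminus_0_r in Fb. exact Fb. }
  split.
  - destruct (Rtotal_order a 0) as [lt|[eq|gt]]; auto.
    + exfalso. set (r := 1 / (- a)). destruct (archimed r) as [A1 _].
      assert (Hr : 0 < r) by (unfold r; apply Rdiv_lt_0_compat; lra).
      set (n := up r) in *. assert (Hn : (0 <= n)%Z) by (apply le_IZR; lra).
      specialize (W n Hn). specialize (Fn n). apply Rabs_le_inv in Fn.
      assert (-a * IZR n > 1).
      { replace 1 with (-a * r) by (unfold r; field; lra). apply Rmult_lt_compat_l; lra. }
      destruct W as [W1 _]. apply IZR_le in W1. rewrite minus_IZR in W1. lra.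
    + exfalso. apply (Irr 0%Z 1%Z ltac:(lia)). rewrite eq. field.
  - destruct (Rtotal_order a 1) as [lt|[eq|gt]]; auto.
    + exfalso. apply (Irr 1%Z 1%Z ltac:(lia)). rewrite eq. field.
    + exfalso. set (r := 1 / (a - 1)). destruct (archimed r) as [A1 _].
      assert (Hr : 0 < r) by (unfold r; apply Rdiv_lt_0_compat; lra).
      set (n := up r) in *. assert (Hn : (0 <= n)%Z) by (apply le_IZR; lra).
      specialize (W n Hn). specialize (Fn n). apply Rabs_le_inv in Fn.
      assert ((a - 1) * IZR n > 1).
      { assert (E1 : (a-1) * r = 1) by (unfold r; field; lra).
        assert ((a-1) * IZR n > (a-1) * r) by (apply Rmult_lt_compat_l; lra). lra. }
      destruct W as [_ W2]. apply IZR_le in W2. rewrite minus_IZR in W2. lra.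
Qed.

Lemma mono01 (f : Z -> Z) : (forall n, f (n+1) = f n \/ f (n+1) = (f n + 1))%Z ->
  forall n m, (n <= m)%Z -> (f n <= f m)%Z.
Proof.
  intros Hf n m Hnm. replace m with (n + Z.of_nat (Z.to_nat (m - n)))%Z by lia.
  induction (Z.to_nat (m - n)) as [|k IH].
  - simpl. rewrite Z.add_0_r. lia.
  - rewrite Nat2Z.inj_succ. replace (n + Z.succ (Z.of_nat k))%Z with (n + Z.of_nat k + 1)%Z by lia.
    destruct (Hf (n + Z.of_nat k)%Z); lia.
Qed.

Lemma divt_aux (f : Z -> Z) (Hf : forall n, (f (n+1) = f n \/ f (n+1) = f n + 1)%Z) m :
  forall (k : nat) n1, (f n1 <= m < f (n1 + Z.of_nat k))%Z -> exists n, f n = m /\ f (n+1)%Z = (m + 1)%Z.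
Proof.
  induction k as [|k IH]; intros n1 Hm.
  - replace (n1 + Z.of_nat 0)%Z with n1 in Hm by lia. lia.
  - destruct (Z_le_gt_dec (f (n1+1)%Z) m) as [le|gt].
    + apply (IH (n1+1)%Z). rewrite Nat2Z.inj_succ in Hm.
      replace (n1 + 1 + Z.of_nat k)%Z with (n1 + Z.succ (Z.of_nat k))%Z by lia. lia.
    + exists n1. destruct (Hf n1); lia.
Qed.

Lemma divt (f : Z -> Z) : (forall n, f (n+1) = f n \/ f (n+1) = (f n + 1))%Z ->
  forall m n1 n2, (f n1 <= m < f n2)%Z -> exists n, f n = m /\ f (n+1)%Z = (m + 1)%Z.
Proof.
  intros Hf m n1 n2 Hm.
  assert (Hlt : (n1 < n2)%Z).
  { apply Z.nle_gt. intros Hle. pose proof (mono01 f Hf n2 n1 Hle). lia. }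
  apply (divt_aux f Hf m (Z.to_nat (n2 - n1)) n1). rewrite Z2Nat.id by lia.
  replace (n1 + (n2 - n1))%Z with n2 by lia. auto.
Qed.

Lemma ledivr x y c : 0 < c -> x * c <= y -> x <= y / c.
Proof. intros Hc H1. unfold Rdiv. apply Rmult_le_reg_r with c; auto.
  rewrite Rmult_assoc, Rinv_l by lra. lra. Qed.

Lemma cs_lemma eps S (HS : Srec eps S) (a b : R) (Ha : 0 < a)
  (Cond : forall n, (eps n = H -> a * IZR (n - S n) + b <= IZR (S n)) /\ (eps n = V -> a * IZR (n - S n) + b >= IZR (S n)))
  (UA : forall m, exists n1 n2, (n1 - S n1 <= m < n2 - S n2)%Z)
  (UB : forall m, exists n1 n2, (S n1 <= m < S n2)%Z) :
  cutting_sequence 0 b a eps.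
Proof.
  set (A := fun n => (n - S n)%Z).
  assert (HA : forall n, (A (n+1) = A n + 1 - vl (eps n))%Z) by (intros n; unfold A; rewrite HS; lia).
  assert (MA : forall n, (A (n+1) = A n \/ A (n+1) = A n + 1)%Z).
  { intros n. rewrite HA. destruct (eps n); simpl; lia. }
  assert (MB : forall n, (S (n+1) = S n \/ S (n+1) = S n + 1)%Z).
  { intros n. rewrite HS. destruct (eps n); simpl; lia. }
  set (tau := fun n => match eps n with H => IZR (A n) | V => (IZR (S n) - b) / a end).
  exists tau. split; [|split].
  - intros n. unfold tau. pose proof (HA n) as E1. pose proof (HS n) as E2. pose proof (Cond n) as [C1 C2].
    destruct (eps n) eqn:En; destruct (eps (n+1)%Z) eqn:En1; simpl in E1, E2.
    + rewrite E1. apply IZR_le. lia.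
    + rewrite E2. apply ledivr; auto.
      specialize (C1 eq_refl). unfold A. rewrite Z.add_0_r. lra.
    + rewrite E1. replace (A n + 1 - 1)%Z with (A n) by lia. apply divle; auto.
      specialize (C2 eq_refl). unfold A. lra.
    + rewrite E2. rewrite plus_IZR. unfold Rdiv. apply Rmult_le_compat_r. { left. apply Rinv_0_lt_compat; auto. } lra.
  - intros n. unfold tau, crosses. destruct (eps n).
    + exists (A n). lra.
    + exists (S n). field. lra.
  - intros l t Ht. destruct l; simpl in Ht; destruct Ht as [m Hm].
    + destruct (UA m) as [n1 [n2 Hn]].
      destruct (divt A MA m n1 n2 Hn) as [n [E1 E2]].
      assert (En : eps n = H).
      { pose proof (HA n). destruct (eps n); simpl in *; auto. lia. }
      exists n. split.
      * unfold tau. rewrite En. cbv iota. rewrite E1. split; [lra|auto].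
      * intros n' [T' E']. unfold tau in T'. rewrite E' in T'. cbv iota in T'.
        assert (EA : A n' = m) by (apply eq_IZR; lra).
        destruct (Z.lt_trichotomy n n') as [lt|[eq|gt]]; auto.
        -- pose proof (mono01 A MA (n+1) n' ltac:(lia)). lia.
        -- pose proof (mono01 A MA (n'+1) n ltac:(lia)). pose proof (HA n'). rewrite E' in *. simpl in *. lia.
    + destruct (UB m) as [n1 [n2 Hn]].
      destruct (divt S MB m n1 n2 Hn) as [n [E1 E2]].
      assert (En : eps n = V).
      { pose proof (HS n). destruct (eps n); simpl in *; auto. lia. }
      assert (Et : t = (IZR m - b) / a) by (field_simplify; [|lra]; apply (Rmult_eq_reg_l a); [|lra]; field_simplify; lra).
      exists n. split.
      * unfold tau. rewrite En. cbv iota. rewrite E1. auto.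
      * intros n' [T' E']. unfold tau in T'. rewrite E' in T'. cbv iota in T'.
        assert (ES : S n' = m).
        { apply eq_IZR. rewrite Et in T'. apply (Rmult_eq_reg_r (/ a)); [|apply Rinv_neq_0_compat; lra].
          unfold Rdiv in T'. lra. }
        destruct (Z.lt_trichotomy n n') as [lt|[eq|gt]]; auto.
        -- pose proof (mono01 S MB (n+1) n' ltac:(lia)). lia.
        -- pose proof (mono01 S MB (n'+1) n ltac:(lia)). pose proof (HS n'). rewrite E' in *. simpl in *. lia.
Qed.

Lemma Frec eps S a (HS : Srec eps S) n : Fv S a (n+1) = Fv S a n + IZR (vl (eps n)) - a.
Proof. unfold Fv. rewrite HS, plus_IZR, plus_IZR. ring. Qed.

Lemma feas eps S a (HS : Srec eps S) (Fb : forall i j, Rabs (Fv S a j - Fv S a i) <= 1) sg R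
  (Refl : forall i, Fv S a i + Fv S a (R - i) = sg \/ (sg/2 - 1/2 <= Fv S a i <= sg/2 + 1/2)) :
  forall n, (eps n = H -> Fv S a n >= sg/2 + a - 1/2) /\ (eps n = V -> Fv S a n <= sg/2 + a - 1/2).
Proof.
  intros n. pose proof (Frec eps S a HS n) as E. split; intros En; rewrite En in E; simpl in E.
  - apply Rnot_lt_ge. intros Hlt.
    destruct (Refl (n+1)%Z) as [R1|R1]; [|lra].
    pose proof (Fb (R - (n+1))%Z (n+1)%Z) as B. apply Rabs_le_inv in B. lra.
  - apply Rnot_gt_le. intros Hgt.
    destruct (Refl (n+1)%Z) as [R1|R1]; [|lra].
    pose proof (Fb (R - (n+1))%Z (n+1)%Z) as B. apply Rabs_le_inv in B. lra.
Qed.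

Lemma unb (f : Z -> Z) c e (Hc : 0 < c) (Hf : forall n, Rabs (IZR (f n) - c * IZR n - e) <= 1) :
  forall m, exists n1 n2, (f n1 <= m < f n2)%Z.
Proof.
  intros m.
  set (r2 := (IZR m - e + 1) / c). destruct (archimed r2) as [A2 _].
  set (r1 := (e + 1 - IZR m) / c). destruct (archimed r1) as [A1 _].
  exists (- up r1)%Z, (up r2).
  pose proof (Hf (- up r1)%Z) as H1. pose proof (Hf (up r2)) as H2.
  apply Rabs_le_inv in H1. apply Rabs_le_inv in H2. rewrite opp_IZR in H1.
  assert (c * IZR (up r2) > IZR m - e + 1).
  { assert (c * IZR (up r2) > c * r2) by (apply Rmult_lt_compat_l; lra).
    assert (c * r2 = IZR m - e + 1) by (unfold r2; field; lra). lra. }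
  assert (c * IZR (up r1) > e + 1 - IZR m).
  { assert (c * IZR (up r1) > c * r1) by (apply Rmult_lt_compat_l; lra).
    assert (c * r1 = e + 1 - IZR m) by (unfold r1; field; lra). lra. }
  split.
  - apply Z.lt_le_incl, lt_IZR. lra.
  - apply lt_IZR. lra.
Qed.

Lemma construct eps S a (HS : Srec eps S) (Ha : 0 < a < 1) (Irr : irrational a)
  (Fb : forall i j, Rabs (Fv S a j - Fv S a i) <= 1) c0
  (Feas : forall n, (eps n = H -> Fv S a n >= c0) /\ (eps n = V -> Fv S a n <= c0)) :
  uniformly_distributed (a / (1 - a)) /\ cutting_sequence 0 (c0 / (1 - a)) (a / (1 - a)) eps.
Proof.
  assert (Ha1 : 0 < 1 - a) by lra.
  split.
  - split. { apply Rdiv_lt_0_compat; lra. }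
    intros p q Hq E. apply not_0_IZR in Hq.
    assert (X : a * IZR q = a / (1 - a) * ((1 - a) * IZR q)) by (field; lra).
    rewrite E in X. assert (Y : IZR p / IZR q * ((1 - a) * IZR q) = (1 - a) * IZR p) by (field; auto).
    rewrite Y in X. clear Y E.
    destruct (Z.eq_dec (p + q) 0) as [e|ne].
    + assert (Eq : IZR q = - IZR p) by (rewrite <- opp_IZR; f_equal; lia).
      rewrite Eq in X. assert (IZR p = 0) by lra. rewrite H, Ropp_0 in Eq. contradiction.
    + apply (Irr p (p + q)%Z ne). rewrite plus_IZR.
      assert (IZR p + IZR q <> 0) by (rewrite <- plus_IZR; apply not_0_IZR; auto).
      apply (Rmult_eq_reg_r (IZR p + IZR q)); auto. field_simplify; auto. lra.
  - apply cs_lemma with (S := S); auto. { apply Rdiv_lt_0_compat; lra. }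
    + intros n. destruct (Feas n) as [F1 F2]. unfold Fv in F1, F2. split; intros En.
      * specialize (F1 En). rewrite minus_IZR.
        replace (a / (1 - a) * (IZR n - IZR (S n)) + c0 / (1 - a)) with ((a * (IZR n - IZR (S n)) + c0) / (1 - a)) by (field; lra).
        apply divle; auto. lra.
      * specialize (F2 En). rewrite minus_IZR.
        replace (a / (1 - a) * (IZR n - IZR (S n)) + c0 / (1 - a)) with ((a * (IZR n - IZR (S n)) + c0) / (1 - a)) by (field; lra).
        apply Rle_ge, ledivr; auto. lra.
    + apply (unb (fun n => (n - S n)%Z) (1 - a) (- IZR (S 0%Z))); auto. intros n.
      pose proof (Fb 0%Z n) as B. unfold Fv in B. rewrite minus_IZR. rewrite Rmult_0_r, Rminus_0_r in B.
      rewrite <- Rabs_Ropp. replace (- (IZR n - IZR (S n) - (1 - a) * IZR n - - IZR (S 0%Z))) with (IZR (S n) - a * IZR n - IZR (S 0%Z)) by ring. auto.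
    + apply (unb S a (IZR (S 0%Z))); try lra. intros n.
      pose proof (Fb 0%Z n) as B. unfold Fv in B. rewrite Rmult_0_r, Rminus_0_r in B. auto.
Qed.

Lemma symS eps S (HS : Srec eps S) (c d : Z)
  (Hsym : forall k : nat, eps (c + Z.of_nat k)%Z = eps (d - 1 - Z.of_nat k)%Z) :
  forall k : nat, (S (c + Z.of_nat k) + S (d - Z.of_nat k) = S c + S d)%Z.
Proof.
  induction k as [|k IH].
  - simpl. rewrite Z.add_0_r, Z.sub_0_r. lia.
  - rewrite Nat2Z.inj_succ.
    replace (c + Z.succ (Z.of_nat k))%Z with ((c + Z.of_nat k) + 1)%Z by lia.
    pose proof (HS (d - Z.succ (Z.of_nat k))%Z) as E.
    replace (d - Z.succ (Z.of_nat k) + 1)%Z with (d - Z.of_nat k)%Z in E by lia.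
    replace (d - Z.succ (Z.of_nat k))%Z with (d - 1 - Z.of_nat k)%Z in * by lia.
    rewrite HS, Hsym. lia.
Qed.

Lemma reflF eps S a (HS : Srec eps S) (c d : Z)
  (Hsym : forall k : nat, eps (c + Z.of_nat k)%Z = eps (d - 1 - Z.of_nat k)%Z) :
  forall i, (c <= i \/ i <= d)%Z -> Fv S a i + Fv S a (c + d - i) = Fv S a c + Fv S a d.
Proof.
  intros i Hi. pose proof (symS eps S HS c d Hsym) as SS.
  assert (E : (S i + S (c + d - i) = S c + S d)%Z).
  { destruct Hi as [Hi|Hi].
    - specialize (SS (Z.to_nat (i - c))). rewrite Z2Nat.id in SS by lia.
      replace (c + (i - c))%Z with i in SS by lia. replace (d - (i - c))%Z with (c + d - i)%Z in SS by lia. lia.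
    - specialize (SS (Z.to_nat (d - i))). rewrite Z2Nat.id in SS by lia.
      replace (d - (d - i))%Z with i in SS by lia. replace (c + (d - i))%Z with (c + d - i)%Z in SS by lia. lia. }
  assert (E' : IZR (S i) + IZR (S (c + d - i)%Z) = IZR (S c) + IZR (S d)) by (rewrite <- !plus_IZR; f_equal; auto).
  unfold Fv. rewrite minus_IZR, plus_IZR. lra.
Qed.

Lemma even_cut eps : sturmian eps -> even_symmetric eps -> cut_seq_through (fun P => P = ptD) eps.
Proof.
  intros St [N HN]. destruct (sturm_data eps St) as [S [a [HS [Ha [Irr Fb]]]]].
  assert (Hsym : forall k : nat, eps (N + Z.of_nat k)%Z = eps (N - 1 - Z.of_nat k)%Z).
  { intros k. rewrite HN by lia. f_equal. lia. }
  pose proof (reflF eps S a HS N N Hsym) as RF.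
  set (sg := 2 * Fv S a N).
  pose proof (feas eps S a HS Fb sg (N + N)%Z) as FE.
  destruct (construct eps S a HS Ha Irr Fb (sg/2 + a - 1/2)) as [UD CS].
  { apply FE. intros i. left. rewrite RF by lia. unfold sg. ring. }
  exists 0, ((sg/2 + a - 1/2) / (1 - a)), (a / (1 - a)). split; auto. split; auto.
  exists ptD. split; auto. unfold through, passes_through, ptD. simpl.
  exists (IZR (N - S N) - 1/2). split.
  - exists (N - S N - 1)%Z. rewrite !minus_IZR. lra.
  - exists (S N - 1)%Z. unfold sg, Fv. rewrite !minus_IZR. field. lra.
Qed.

Lemma odd_cut eps : sturmian eps -> odd_symmetric eps -> cut_seq_through (fun P => P = ptB \/ P = ptC) eps.
Proof.
  intros St [N HN]. destruct (sturm_data eps St) as [S [a [HS [Ha [Irr Fb]]]]].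
  assert (Hsym : forall k : nat, eps (N + 1 + Z.of_nat k)%Z = eps (N - 1 - Z.of_nat k)%Z).
  { intros k. replace (N + 1 + Z.of_nat k)%Z with (N + (Z.of_nat k + 1))%Z by lia. rewrite HN by lia. f_equal. lia. }
  pose proof (reflF eps S a HS (N+1) N Hsym) as RF.
  set (sg := Fv S a (N+1) + Fv S a N).
  pose proof (feas eps S a HS Fb sg (N + 1 + N)%Z) as FE.
  destruct (construct eps S a HS Ha Irr Fb (sg/2 + a - 1/2)) as [UD CS].
  { apply FE. intros i. left. rewrite RF by lia. unfold sg. ring. }
  exists 0, ((sg/2 + a - 1/2) / (1 - a)), (a / (1 - a)). split; auto. split; auto.
  pose proof (Frec eps S a HS N) as FR. unfold sg. rewrite FR.
  destruct (eps N) eqn:EN; simpl.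
  - exists ptC. split; auto. unfold through, passes_through, ptC. simpl.
    exists (IZR (N - S N)). split.
    + exists (N - S N)%Z. lra.
    + exists (S N - 1)%Z. unfold Fv. rewrite !minus_IZR. field. lra.
  - exists ptB. split; auto. unfold through, passes_through, ptB. simpl.
    exists (IZR (N - S N) - 1/2). split.
    + exists (N - S N - 1)%Z. rewrite !minus_IZR. lra.
    + exists (S N)%Z. unfold Fv. rewrite !minus_IZR. field. lra.
Qed.

Lemma almost_cut eps : sturmian eps -> almost_symmetric eps -> cut_seq_through (fun P => P = ptA) eps.
Proof.
  intros St [N [HN Hne]]. destruct (sturm_data eps St) as [S [a [HS [Ha [Irr Fb]]]]].
  assert (Hsym : forall k : nat, eps (N + 1 + Z.of_nat k)%Z = eps (N - 1 - 1 - Z.of_nat k)%Z).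
  { intros k. replace (N + 1 + Z.of_nat k)%Z with (N + (Z.of_nat k + 1))%Z by lia. rewrite HN by lia. f_equal. lia. }
  pose proof (reflF eps S a HS (N+1) (N-1) Hsym) as RF.
  set (sg := Fv S a (N+1) + Fv S a (N-1)).
  pose proof (Frec eps S a HS N) as FR1. pose proof (Frec eps S a HS (N-1)) as FR0.
  replace (N - 1 + 1)%Z with N in FR0 by lia.
  assert (Vs : (vl (eps N) + vl (eps (N-1)%Z) = 1)%Z).
  { destruct (eps N), (eps (N-1)%Z); simpl; congruence. }
  assert (Vs' : IZR (vl (eps N)) + IZR (vl (eps (N-1)%Z)) = 1) by (rewrite <- plus_IZR, Vs; reflexivity).
  pose proof (feas eps S a HS Fb sg (N + 1 + (N - 1))%Z) as FE.
  assert (C0 : sg/2 + a - 1/2 = Fv S a (N-1)).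
  { unfold sg. rewrite FR1, FR0. set (u := IZR (vl (eps N))) in *. set (w := IZR (vl (eps (N-1)%Z))) in *. set (G := Fv S a (N-1)) in *. lra. }
  destruct (construct eps S a HS Ha Irr Fb (sg/2 + a - 1/2)) as [UD CS].
  { apply FE. intros i. destruct (Z.eq_dec i N) as [->|ne].
    - right. unfold sg. rewrite FR1.
      pose proof (vl_range (eps N)) as R1. pose proof (vl_range (eps (N-1)%Z)) as R2.
      assert (vl (eps N) = 0 \/ vl (eps N) = 1)%Z as [E|E] by lia;
        rewrite E in *; simpl in *; split; lra.
    - left. rewrite RF by lia. unfold sg. ring. }
  exists 0, ((sg/2 + a - 1/2) / (1 - a)), (a / (1 - a)). split; auto. split; auto.
  exists ptA. split; auto. unfold through, passes_through, ptA. simpl.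
  exists (IZR ((N - 1) - S (N - 1)%Z)). split.
  - exists ((N - 1) - S (N - 1)%Z)%Z. lra.
  - exists (S (N - 1)%Z). rewrite C0. unfold Fv. rewrite !minus_IZR. field. lra.
Qed.

Definition enum (E : letter -> R -> Prop) (tau : Z -> R) (e : bseq) :=
  (forall n, tau n <= tau (n+1)%Z) /\ (forall n, E (e n) (tau n)) /\
  (forall l t, E l t -> exists! n, tau n = t /\ e n = l).

Definition DD (E : letter -> R -> Prop) t := E H t /\ E V t.

Lemma en_mono E tau e : enum E tau e -> forall n m, (n <= m)%Z -> tau n <= tau m.
Proof.
  intros [M _] n m Hnm. replace m with (n + Z.of_nat (Z.to_nat (m - n)))%Z by lia.
  induction (Z.to_nat (m - n)) as [|k IH].
  - simpl. rewrite Z.add_0_r. lra.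
  - rewrite Nat2Z.inj_succ. replace (n + Z.succ (Z.of_nat k))%Z with (n + Z.of_nat k + 1)%Z by lia.
    specialize (M (n + Z.of_nat k)%Z). lra.
Qed.

Lemma en_inj E tau e : enum E tau e -> forall n m, tau n = tau m -> e n = e m -> n = m.
Proof.
  intros [M [Ev U]] n m T L. destruct (U (e n) (tau n) (Ev n)) as [x [_ Ux]].
  rewrite <- (Ux n) by auto. apply Ux. auto.
Qed.

Lemma en_lt E tau e : enum E tau e -> forall n m, tau n < tau m -> (n < m)%Z.
Proof.
  intros En n m T. apply Z.nle_gt. intros Hle. pose proof (en_mono E tau e En m n Hle). lra.
Qed.

Lemma en_three E tau e : enum E tau e -> forall i, ~ (tau (i-1)%Z = tau i /\ tau (i+1)%Z = tau i).
Proof.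
  intros En i [A B].
  destruct (e (i-1)%Z) eqn:E1, (e i) eqn:E2, (e (i+1)%Z) eqn:E3;
  try (assert (i - 1 = i)%Z by (apply (en_inj E tau e En); congruence); lia);
  try (assert (i + 1 = i)%Z by (apply (en_inj E tau e En); congruence); lia);
  try (assert (i - 1 = i + 1)%Z by (apply (en_inj E tau e En); congruence); lia).
Qed.

Lemma en_pair E tau e : enum E tau e -> forall i,
  (tau (i+1)%Z = tau i \/ tau (i-1)%Z = tau i) <-> DD E (tau i).
Proof.
  intros En i. pose proof En as [M [Ev U]]. split.
  - intros Hj. assert (exists j, j <> i /\ tau j = tau i) as [j [Hji Tj]].
    { destruct Hj; [exists (i+1)%Z|exists (i-1)%Z]; split; auto; lia. }
    assert (e j <> e i) by (intros Ee; apply Hji; apply (en_inj E tau e En); auto).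
    pose proof (Ev i) as Ei. pose proof (Ev j) as Ej. rewrite Tj in Ej.
    unfold DD. destruct (e i), (e j); try congruence; split; auto.
  - intros [DH DV].
    assert (exists j, tau j = tau i /\ e j <> e i) as [j [Tj Ej]].
    { destruct (e i) eqn:Ei.
      - destruct (U V (tau i) DV) as [j [[Tj Ej] _]]. exists j. rewrite Ej. split; auto; discriminate.
      - destruct (U H (tau i) DH) as [j [[Tj Ej] _]]. exists j. rewrite Ej. split; auto; discriminate. }
    assert (j <> i) by (intros ->; auto).
    destruct (Z_lt_le_dec i j) as [lt|le].
    + left. pose proof (en_mono E tau e En i (i+1) ltac:(lia)). pose proof (en_mono E tau e En (i+1) j ltac:(lia)). lra.
    + right. pose proof (en_mono E tau e En (i-1) i ltac:(lia)). pose proof (en_mono E tau e En j (i-1) ltac:(lia)). lra.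
Qed.

Lemma fw E tau1 e1 tau2 e2 (E1 : enum E tau1 e1) (E2 : enum E tau2 e2) a1 a2
  (T0 : tau1 a1 = tau2 a2) (I0 : tau1 (a1 - 1)%Z = tau1 a1 <-> tau2 (a2 - 1)%Z = tau2 a2) :
  forall k : nat, tau2 (a2 + Z.of_nat k)%Z = tau1 (a1 + Z.of_nat k)%Z /\
    (tau1 (a1 + Z.of_nat k - 1)%Z = tau1 (a1 + Z.of_nat k)%Z <-> tau2 (a2 + Z.of_nat k - 1)%Z = tau2 (a2 + Z.of_nat k)%Z).
Proof.
  induction k as [|k [IT II]].
  - simpl. rewrite !Z.add_0_r. auto.
  - rewrite Nat2Z.inj_succ.
    replace (a1 + Z.succ (Z.of_nat k))%Z with ((a1 + Z.of_nat k) + 1)%Z by lia.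
    replace (a2 + Z.succ (Z.of_nat k))%Z with ((a2 + Z.of_nat k) + 1)%Z by lia.
    replace (a1 + Z.of_nat k + 1 - 1)%Z with (a1 + Z.of_nat k)%Z by lia.
    replace (a2 + Z.of_nat k + 1 - 1)%Z with (a2 + Z.of_nat k)%Z by lia.
    set (i1 := (a1 + Z.of_nat k)%Z) in *. set (i2 := (a2 + Z.of_nat k)%Z) in *.
    replace (a1 + Z.of_nat k - 1)%Z with (i1 - 1)%Z in II by (unfold i1; lia).
    replace (a2 + Z.of_nat k - 1)%Z with (i2 - 1)%Z in II by (unfold i2; lia).
    pose proof (en_pair E tau1 e1 E1 i1) as P1. pose proof (en_pair E tau2 e2 E2 i2) as P2.
    pose proof (en_three E tau1 e1 E1 i1) as Th1. pose proof (en_three E tau2 e2 E2 i2) as Th2.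
    rewrite IT in P2, Th2.
    destruct (Req_dec (tau2 (i2 + 1)%Z) (tau1 i1)) as [X2|X2].
    + assert (D : DD E (tau1 i1)) by (apply P2; auto).
      assert (N2 : tau2 (i2 - 1)%Z <> (tau1 i1)) by (intros Y; apply Th2; auto).
      assert (N1 : tau1 (i1 - 1)%Z <> (tau1 i1)) by (intros Y; apply N2; rewrite <- IT; apply II; auto).
      assert (X1 : tau1 (i1 + 1)%Z = (tau1 i1)) by (destruct (proj2 P1 D); auto; contradiction).
      split; [congruence|]. rewrite IT, X1, X2. tauto.
    + assert (X1 : tau1 (i1 + 1)%Z <> (tau1 i1)).
      { intros X1. assert (D : DD E (tau1 i1)) by (apply P1; auto).
        assert (N1 : tau1 (i1 - 1)%Z <> (tau1 i1)) by (intros Y; apply Th1; auto).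
        assert (N2 : tau2 (i2 - 1)%Z <> (tau1 i1)) by (intros Y; apply N1; apply II; rewrite IT; auto).
        destruct (proj2 P2 D); contradiction. }
      assert (G1 : (tau1 i1) < tau1 (i1 + 1)%Z) by (pose proof (proj1 E1 i1); lra).
      assert (G2 : (tau1 i1) < tau2 (i2 + 1)%Z) by (pose proof (proj1 E2 i2); rewrite IT in *; lra).
      assert (A : tau1 (i1+1)%Z <= tau2 (i2+1)%Z).
      { pose proof E1 as [_ [_ U1]]. pose proof E2 as [_ [Ev2 _]].
        destruct (U1 _ _ (Ev2 (i2+1)%Z)) as [j [[Tj _] _]].
        assert (Hj : (i1 < j)%Z) by (apply (en_lt E tau1 e1 E1); lra).
        rewrite <- Tj. apply (en_mono E tau1 e1 E1). lia. }
      assert (B : tau2 (i2+1)%Z <= tau1 (i1+1)%Z).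
      { pose proof E2 as [_ [_ U2]]. pose proof E1 as [_ [Ev1 _]].
        destruct (U2 _ _ (Ev1 (i1+1)%Z)) as [j [[Tj _] _]].
        assert (Hj : (i2 < j)%Z) by (apply (en_lt E tau2 e2 E2); rewrite IT; lra).
        rewrite <- Tj. apply (en_mono E tau2 e2 E2). lia. }
      split; [lra|]. split; intros Y; exfalso.
      * apply X1. auto.
      * apply X2. rewrite <- IT. auto.
Qed.

Lemma en_rev E tau e : enum E tau e -> enum (fun l t => E l (- t)) (fun n => - tau (- n)%Z) (fun n => e (- n)%Z).
Proof.
  intros [M [Ev U]]. split; [|split].
  - intros n. pose proof (M (- (n+1))%Z). replace (- (n+1) + 1)%Z with (- n)%Z in H by lia. lra.
  - intros n. rewrite Ropp_involutive. auto.
  - intros l t Et. destruct (U l (- t) Et) as [m [[Tm Em] Um]].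
    exists (- m)%Z. split.
    + rewrite Z.opp_involutive. split; auto. lra.
    + intros n [Tn En]. rewrite (Um (- n)%Z); [lia|]. split; auto. lra.
Qed.

Lemma en_refl E tau e t0 (Hr : forall l t, E l t -> E l (2 * t0 - t)) :
  enum E tau e -> enum E (fun n => 2 * t0 - tau (- n)%Z) (fun n => e (- n)%Z).
Proof.
  intros [M [Ev U]]. split; [|split].
  - intros n. pose proof (M (- (n+1))%Z). replace (- (n+1) + 1)%Z with (- n)%Z in H by lia. lra.
  - intros n. apply Hr. auto.
  - intros l t Et. pose proof (Hr l t Et) as Et'. destruct (U l _ Et') as [m [[Tm Em] Um]].
    exists (- m)%Z. split.
    + rewrite Z.opp_involutive. split; auto. lra.
    + intros n [Tn En]. rewrite (Um (- n)%Z); [lia|]. split; auto. lra.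
Qed.

Lemma first_idx E tau e (En : enum E tau e) i : exists a, tau a = tau i /\ tau (a - 1)%Z <> tau a.
Proof.
  destruct (Req_dec (tau (i-1)%Z) (tau i)) as [Eq|Ne].
  - exists (i-1)%Z. split; auto. intros X. apply (en_three E tau e En (i-1)). split.
    + rewrite X. auto.
    + replace (i - 1 + 1)%Z with i by lia. auto.
  - exists i. auto.
Qed.

Lemma Ushift E tau1 e1 tau2 e2 (E1 : enum E tau1 e1) (E2 : enum E tau2 e2) :
  exists s, forall n, tau2 n = tau1 (n + s)%Z.
Proof.
  destruct (first_idx E tau2 e2 E2 0%Z) as [a2 [Ta2 Fa2]].
  pose proof E1 as [_ [_ U1]]. pose proof E2 as [_ [Ev2 _]].
  destruct (U1 _ _ (Ev2 0%Z)) as [m [[Tm _] _]].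
  destruct (first_idx E tau1 e1 E1 m) as [a1 [Ta1 Fa1]].
  assert (T0 : tau1 a1 = tau2 a2) by congruence.
  pose proof (fw E tau1 e1 tau2 e2 E1 E2 a1 a2 T0 ltac:(split; intros; contradiction)) as FW.
  pose proof (en_rev E tau1 e1 E1) as R1. pose proof (en_rev E tau2 e2 E2) as R2.
  assert (I0 : (fun n => - tau1 (- n)%Z) (- a1 - 1)%Z = (fun n => - tau1 (- n)%Z) (- a1)%Z <->
               (fun n => - tau2 (- n)%Z) (- a2 - 1)%Z = (fun n => - tau2 (- n)%Z) (- a2)%Z).
  { simpl. replace (- (- a1 - 1))%Z with (a1 + 1)%Z by lia. replace (- (- a2 - 1))%Z with (a2 + 1)%Z by lia.
    rewrite !Z.opp_involutive.
    pose proof (en_pair E tau1 e1 E1 a1) as P1. pose proof (en_pair E tau2 e2 E2 a2) as P2.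
    rewrite T0 in P1. split; intros X.
    - assert (D : DD E (tau2 a2)) by (apply P1; left; lra).
      apply P2 in D. destruct D as [D|D]; [lra|contradiction].
    - assert (D : DD E (tau2 a2)) by (apply P2; left; lra).
      apply P1 in D. destruct D as [D|D]; [lra|]. rewrite <- T0 in D. contradiction. }
  pose proof (fw _ _ _ _ _ R1 R2 (- a1)%Z (- a2)%Z ltac:(simpl; rewrite !Z.opp_involutive; lra) I0) as BW.
  exists (a1 - a2)%Z. intros n. destruct (Z_le_gt_dec a2 n) as [le|gt].
  - destruct (FW (Z.to_nat (n - a2))) as [X _]. rewrite Z2Nat.id in X by lia.
    replace (a2 + (n - a2))%Z with n in X by lia. rewrite X. f_equal. lia.
  - destruct (BW (Z.to_nat (a2 - n))) as [X _]. rewrite Z2Nat.id in X by lia. simpl in X.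
    replace (- (- a2 + (a2 - n)))%Z with n in X by lia.
    replace (- (- a1 + (a2 - n)))%Z with (n + (a1 - a2))%Z in X by lia. lra.
Qed.

Lemma Ulabel E tau1 e1 tau2 e2 (E1 : enum E tau1 e1) (E2 : enum E tau2 e2) s
  (Hs : forall n, tau2 n = tau1 (n + s)%Z) : forall n, e2 n = e1 (n + s)%Z \/ DD E (tau2 n).
Proof.
  intros n. pose proof (proj1 (proj2 E1) (n + s)%Z) as A. pose proof (proj1 (proj2 E2) n) as B.
  rewrite <- Hs in A. destruct (e2 n) eqn:X, (e1 (n+s)%Z) eqn:Y; auto; right; split; auto.
Qed.

Lemma irr_contra a (Irr : irrational a) (u w : Z) : u <> 0%Z -> a * IZR u = IZR w -> False.
Proof.
  intros Hu E. apply (Irr w u Hu). rewrite <- E. field. apply not_0_IZR; auto.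
Qed.

Lemma half_not_int z : IZR z <> 1/2.
Proof.
  intros E. destruct (Z_le_gt_dec z 0) as [le|gt].
  - apply IZR_le in le. lra.
  - assert (1 <= z)%Z by lia. apply IZR_le in H. lra.
Qed.

Lemma refl_cross x0 y0 a t0 px py P Q (Hx : is_int (x0 + t0 - px)) (Hy : is_int (y0 + a * t0 - py))
  (HP : 2 * px = IZR P) (HQ : 2 * py = IZR Q) :
  forall l t, crosses x0 y0 a l t -> crosses x0 y0 a l (2 * t0 - t).
Proof.
  destruct Hx as [k1 Hk1], Hy as [k2 Hk2].
  intros l t Hc. destruct l; simpl in *; destruct Hc as [m Hm].
  - exists (2 * k1 + P - m)%Z. rewrite minus_IZR, plus_IZR, mult_IZR. lra.
  - exists (2 * k2 + Q - m)%Z. rewrite minus_IZR, plus_IZR, mult_IZR. lra.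
Qed.

Lemma rev_common x0 y0 a eps tau (En : enum (crosses x0 y0 a) tau eps) t0
  (Hr : forall l t, crosses x0 y0 a l t -> crosses x0 y0 a l (2 * t0 - t)) :
  exists s, forall n, 2 * t0 - tau (- n)%Z = tau (n + s)%Z /\
    (eps (- n)%Z = eps (n + s)%Z \/ DD (crosses x0 y0 a) (tau (n + s)%Z)).
Proof.
  pose proof (en_refl _ tau eps t0 Hr En) as ER.
  destruct (Ushift _ _ _ _ _ En ER) as [s Hs]. exists s. intros n. split; auto.
  destruct (Ulabel _ _ _ _ _ En ER s Hs n) as [X|X]; auto. right. rewrite <- Hs. auto.
Qed.

Lemma cs_enum x0 y0 a eps : cutting_sequence x0 y0 a eps -> exists tau, enum (crosses x0 y0 a) tau eps.
Proof. intros [tau T]. exists tau. exact T. Qed.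

Lemma rev_D eps : cut_seq_through (fun P => P = ptD) eps -> even_symmetric eps.
Proof.
  intros [x0 [y0 [a [[Ha Irr] [[P [-> Th]] CS]]]]].
  destruct (cs_enum _ _ _ _ CS) as [tau En]. destruct Th as [t0 [Hx Hy]]. simpl in Hx, Hy.
  assert (Hr := refl_cross x0 y0 a t0 (1/2) (1/2) 1 1 Hx Hy ltac:(simpl; lra) ltac:(simpl; lra)).
  destruct (rev_common x0 y0 a eps tau En t0 Hr) as [s Hs].
  destruct Hx as [k1 Hk1], Hy as [k2 Hk2].
  assert (NoD : forall t, ~ DD (crosses x0 y0 a) t).
  { intros t [[m1 Hm1] [m2 Hm2]].
    apply (irr_contra a Irr (2 * (m1 - k1) - 1) (2 * (m2 - k2) - 1)); [lia|].
    rewrite !minus_IZR, !mult_IZR, !minus_IZR. simpl. nra. }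
  assert (NoT0 : forall l, ~ crosses x0 y0 a l t0).
  { intros [] [m Hm].
    - apply (half_not_int (m - k1)). rewrite minus_IZR. simpl in Hm. lra.
    - apply (half_not_int (m - k2)). rewrite minus_IZR. simpl in Hm. lra. }
  destruct (Z.Even_or_Odd s) as [[N HN]|[N HN]].
  - exfalso. destruct (Hs (- N)%Z) as [T _]. rewrite Z.opp_involutive in T.
    replace (- N + s)%Z with N in T by lia.
    apply (NoT0 (eps N)). replace t0 with (tau N) by lra. apply (proj1 (proj2 En)).
  - exists (N + 1)%Z. intros k Hk. destruct (Hs (k - N)%Z) as [_ [L|L]]; [|exfalso; eapply NoD; eauto].
    replace (- (k - N))%Z with (N + 1 - k - 1)%Z in L by lia.
    replace (k - N + s)%Z with (N + 1 + k)%Z in L by lia. auto.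
Qed.

Lemma rev_BC eps : cut_seq_through (fun P => P = ptB \/ P = ptC) eps -> odd_symmetric eps.
Proof.
  intros [x0 [y0 [a [[Ha Irr] [[P [HP Th]] CS]]]]].
  destruct (cs_enum _ _ _ _ CS) as [tau En].
  assert (Key : exists t0 l, crosses x0 y0 a l t0 /\ (forall t, ~ DD (crosses x0 y0 a) t) /\
     (forall l t, crosses x0 y0 a l t -> crosses x0 y0 a l (2 * t0 - t))).
  { destruct Th as [t0 [Hx Hy]]. exists t0. destruct HP as [->| ->]; simpl in Hx, Hy.
    - exists V. pose proof (refl_cross x0 y0 a t0 (1/2) 0 1 0 Hx Hy ltac:(simpl; lra) ltac:(simpl; lra)) as Hr.
      destruct Hx as [k1 Hk1], Hy as [k2 Hk2]. split; [|split; auto].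
      + simpl. exists k2. lra.
      + intros t [[m1 Hm1] [m2 Hm2]].
        apply (irr_contra a Irr (2 * (m1 - k1) - 1) (2 * (m2 - k2))); [lia|].
        rewrite !minus_IZR, !mult_IZR, !minus_IZR. simpl. nra.
    - exists H. pose proof (refl_cross x0 y0 a t0 0 (1/2) 0 1 Hx Hy ltac:(simpl; lra) ltac:(simpl; lra)) as Hr.
      destruct Hx as [k1 Hk1], Hy as [k2 Hk2]. split; [|split; auto].
      + simpl. exists k1. lra.
      + intros t [[m1 Hm1] [m2 Hm2]].
        destruct (Z.eq_dec (m1 - k1) 0) as [e|ne].
        * assert (IZR (2 * (m2 - k2) - 1) = 0).
          { rewrite minus_IZR, mult_IZR, minus_IZR. assert (IZR m1 = IZR k1) by (f_equal; lia). simpl. nra. }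
          apply eq_IZR_R0 in H. lia.
        * apply (irr_contra a Irr (2 * (m1 - k1)) (2 * (m2 - k2) - 1)); [lia|].
          rewrite !minus_IZR, !mult_IZR, !minus_IZR. simpl. nra. }
  destruct Key as [t0 [l [Ev [NoD Hr]]]].
  destruct (rev_common x0 y0 a eps tau En t0 Hr) as [s Hs].
  destruct (proj2 (proj2 En) l t0 Ev) as [j [[Tj Ej] _]].
  destruct (Z.Even_or_Odd s) as [[N HN]|[N HN]].
  - exists N. intros k Hk. destruct (Hs (k - N)%Z) as [_ [L|L]]; [|exfalso; eapply NoD; eauto].
    replace (- (k - N))%Z with (N - k)%Z in L by lia.
    replace (k - N + s)%Z with (N + k)%Z in L by lia. auto.
  - exfalso. destruct (Hs (- j)%Z) as [T [L|L]]; [|eapply NoD; eauto].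
    rewrite Z.opp_involutive in T, L.
    assert (j = - j + s)%Z.
    { apply (en_inj _ tau eps En); [lra|auto]. }
    lia.
Qed.

Lemma rev_A eps : cut_seq_through (fun P => P = ptA) eps -> almost_symmetric eps.
Proof.
  intros [x0 [y0 [a [[Ha Irr] [[P [-> Th]] CS]]]]].
  destruct (cs_enum _ _ _ _ CS) as [tau En]. destruct Th as [t0 [Hx Hy]]. simpl in Hx, Hy.
  assert (Hr := refl_cross x0 y0 a t0 0 0 0 0 Hx Hy ltac:(simpl; lra) ltac:(simpl; lra)).
  destruct (rev_common x0 y0 a eps tau En t0 Hr) as [s Hs].
  destruct Hx as [k1 Hk1], Hy as [k2 Hk2].
  assert (OnlyT0 : forall t, DD (crosses x0 y0 a) t -> t = t0).
  { intros t [[m1 Hm1] [m2 Hm2]]. destruct (Z.eq_dec (m1 - k1) 0) as [e|ne].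
    - assert (IZR m1 = IZR k1) by (f_equal; lia). lra.
    - exfalso. apply (irr_contra a Irr (m1 - k1) (m2 - k2)); [lia|].
      rewrite !minus_IZR. nra. }
  assert (CH : crosses x0 y0 a H t0) by (exists k1; lra).
  assert (CV : crosses x0 y0 a V t0) by (exists k2; lra).
  destruct (proj2 (proj2 En) H t0 CH) as [jH [[TH EH] _]].
  destruct (proj2 (proj2 En) V t0 CV) as [jV [[TV EV] _]].
  assert (Idx : forall m, tau m = t0 -> m = jH \/ m = jV).
  { intros m Tm. destruct (eps m) eqn:Em.
    - left. apply (en_inj _ tau eps En); congruence.
    - right. apply (en_inj _ tau eps En); congruence. }
  assert (Hne : jH <> jV) by (intros e; subst; congruence).
  set (c := Z.min jH jV).
  assert (Tc : tau c = t0) by (unfold c; destruct (Z.min_spec jH jV) as [[_ ->]|[_ ->]]; auto).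
  assert (Tc1 : tau (c+1)%Z = t0).
  { pose proof (en_mono _ tau eps En c (c+1) ltac:(lia)).
    pose proof (en_mono _ tau eps En (c+1) (Z.max jH jV) ltac:(unfold c; lia)).
    assert (tau (Z.max jH jV) = t0) by (destruct (Z.max_spec jH jV) as [[_ ->]|[_ ->]]; auto). lra. }
  assert (Ic : forall m, tau m = t0 -> m = c \/ m = (c+1)%Z).
  { intros m Tm. pose proof (Idx m Tm) as [A|A]; pose proof (Idx (c+1)%Z Tc1) as [B|B];
    unfold c in *; lia. }
  assert (Lc : eps c <> eps (c+1)%Z).
  { intros E. assert (c = c + 1)%Z by (apply (en_inj _ tau eps En); congruence). lia. }
  assert (Hs1 : s = (2 * c + 1)%Z).
  { destruct (Hs (- c)%Z) as [T1 _]. destruct (Hs (- (c+1))%Z) as [T2 _].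
    rewrite Z.opp_involutive in T1, T2. rewrite Tc in T1. rewrite Tc1 in T2.
    assert (A1 : tau (- c + s)%Z = t0) by lra. assert (A2 : tau (- (c+1) + s)%Z = t0) by lra.
    apply Ic in A1. apply Ic in A2. lia. }
  exists (c + 1)%Z. split.
  - intros k Hk. destruct (Hs (k - c)%Z) as [_ [L|L]].
    + replace (- (k - c))%Z with (c + 1 - k - 1)%Z in L by lia.
      replace (k - c + s)%Z with (c + 1 + k)%Z in L by lia. auto.
    + exfalso. apply OnlyT0 in L. apply Ic in L. lia.
  - replace (c + 1 - 1)%Z with c by lia. auto.
Qed.

Lemma cst_mono (Q1 Q2 : R * R -> Prop) eps : (forall P, Q1 P -> Q2 P) -> cut_seq_through Q1 eps -> cut_seq_through Q2 eps.
Proof.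
  intros HQ [x0 [y0 [a [U [[P [HP Th]] CS]]]]]. exists x0, y0, a. split; auto. split; auto. exists P. auto.
Qed.

Theorem lemma4p1 (eps : bseq) :
  sturmian eps ->
  (symmetric eps <-> cut_seq_through weierstrass eps) /\
  (even_symmetric eps <-> cut_seq_through (fun P => P = ptD) eps) /\
  (almost_symmetric eps <-> cut_seq_through (fun P => P = ptA) eps) /\
  (odd_symmetric eps <-> cut_seq_through (fun P => P = ptB \/ P = ptC) eps).
Proof.
  intros St. split; [|split; [|split]].
  - split.
    + intros [O|[E|A]].
      * apply (cst_mono (fun P => P = ptB \/ P = ptC)); [|apply odd_cut; auto]. intros P HP; unfold weierstrass; tauto.
      * apply (cst_mono (fun P => P = ptD)); [|apply even_cut; auto]. intros P HP; unfold weierstrass; tauto.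
      * apply (cst_mono (fun P => P = ptA)); [|apply almost_cut; auto]. intros P HP; unfold weierstrass; tauto.
    + intros [x0 [y0 [a [U [[P [HP Th]] CS]]]]].
      destruct HP as [HP|[HP|[HP|HP]]].
      * right; right. apply rev_A. exists x0, y0, a. split; auto. split; auto. exists P; auto.
      * left. apply rev_BC. exists x0, y0, a. split; auto. split; auto. exists P; auto.
      * left. apply rev_BC. exists x0, y0, a. split; auto. split; auto. exists P; auto.
      * right; left. apply rev_D. exists x0, y0, a. split; auto. split; auto. exists P; auto.
  - split; [apply even_cut; auto | apply rev_D].
  - split; [apply almost_cut; auto | apply rev_A].
  - split; [apply odd_cut; auto | apply rev_BC].
Qed.
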